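(* Let $h>0$ and $0\le\alpha<1/4$. Let $g\in\mathcal G$, write $t=\dfrac{2h}{\tan(\pi/4-\alpha)}$, and let $s_p=g+(-t/2,0,h)$, $s_q=g+(t/2,0,h)$ (both in $\mathcal S$). Then $$\varepsilon(g,\{s_p,s_q\})\;\le\;\sqrt{\frac{1+2\alpha}{1-4\alpha}}\;\varepsilon(g,\mathcal S).$$
   Context: Work in $\mathbb{R}^3$ with coordinates $(x,y,z)$. The ground plane is $\mathcal G=\{z=0\}$ and the viewing plane is $\mathcal S=\{z=h\}$, $h>0$. Fix an error bound $\alpha>0$. For a point $s$ and a unit vector $u$, the cone $K(s,u)=\{s+rv:\ r\ge0,\ |v|=1,\ \angle(v,u)\le\alpha\}$ (right circular cone with apex $s$, axis $u$, half-angle $\alpha$). For a target $g$ and camera location $s$, $\mathcal K(g,s)$ is the set of all cones $K(s,u)$, over all unit vectors $u$, containing $g$. For a set $C\subseteq\mathcal S$ of camera locations, the worst-case uncertainty is $\varepsilon(g,C)=\sup\{\operatorname{diam}(\bigcap_{s\in C}K_s): K_s\in\mathcal K(g,s)\ \forall s\in C\}$; $\varepsilon(g,\mathcal S)$ uses every point of $\mathcal S$ as a camera. *)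

(* Defs.v *)
From Stdlib Require Import Reals Lra.
Open Scope R_scope.

Record vec3 := mkV { vx : R; vy : R; vz : R }.

Definition vadd (a b : vec3) : vec3 := mkV (vx a + vx b) (vy a + vy b) (vz a + vz b).
Definition vsub (a b : vec3) : vec3 := mkV (vx a - vx b) (vy a - vy b) (vz a - vz b).
Definition vscale (r : R) (a : vec3) : vec3 := mkV (r * vx a) (r * vy a) (r * vz a).
Definition dot (a b : vec3) : R := vx a * vx b + vy a * vy b + vz a * vz b.
Definition vnorm (a : vec3) : R := sqrt (dot a a).
Definition dist (a b : vec3) : R := vnorm (vsub a b).

Definition angle (v u : vec3) : R := acos (dot v u / (vnorm v * vnorm u)).

Definition ground (g : vec3) : Prop := vz g = 0.
Definition view_plane (h : R) (s : vec3) : Prop := vz s = h.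

Definition cone (alpha : R) (s u : vec3) (p : vec3) : Prop :=
  exists r v, 0 <= r /\ vnorm v = 1 /\ angle v u <= alpha /\ p = vadd s (vscale r v).

Definition diam_le (A : vec3 -> Prop) (d : R) : Prop :=
  forall x y, A x -> A y -> dist x y <= d.

(* A choice of cones K_s in K(g,s) for every camera s in C is given by a choice
   of unit axes u s with g in K(s, u s).  "eps_le alpha g C d" means
   eps(g,C) <= d, i.e. d bounds the diameter of every such intersection
   bigcap_{s in C} K_s (this is the definition of the supremum being <= d). *)
Definition admissible_axes (alpha : R) (g : vec3) (C : vec3 -> Prop) (u : vec3 -> vec3) : Prop :=
  forall s, C s -> vnorm (u s) = 1 /\ cone alpha s (u s) g.

Definition cone_inter (alpha : R) (C : vec3 -> Prop) (u : vec3 -> vec3) (p : vec3) : Prop :=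
  forall s, C s -> cone alpha s (u s) p.

Definition eps_le (alpha : R) (g : vec3) (C : vec3 -> Prop) (d : R) : Prop :=
  forall u, admissible_axes alpha g C u -> diam_le (cone_inter alpha C u) d.

(* Main.v *)
Require Import Defs.
From Stdlib Require Import Reals Lra Psatz.
Open Scope R_scope.

Ltac vdestr := repeat match goal with v : vec3 |- _ => destruct v end.
Ltac vunf := unfold dot, vadd, vsub, vscale, vnorm, dist in *; simpl in *.

Lemma dot_comm a b : dot a b = dot b a.
Proof. vdestr; unfold dot; simpl; ring. Qed.

Lemma dot_self_ge0 a : 0 <= dot a a.
Proof. destruct a as [a1 a2 a3]; unfold dot; simpl; nra. Qed.

Lemma vnorm_ge0 a : 0 <= vnorm a.
Proof. unfold vnorm; apply sqrt_pos. Qed.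

Lemma vnorm_sq a : vnorm a * vnorm a = dot a a.
Proof. unfold vnorm; apply sqrt_sqrt, dot_self_ge0. Qed.

Lemma CS a b : (dot a b)^2 <= dot a a * dot b b.
Proof.
  destruct a as [a1 a2 a3], b as [b1 b2 b3]; unfold dot; simpl.
  assert (0 <= (a1*b2 - a2*b1)^2 + (a1*b3 - a3*b1)^2 + (a2*b3-a3*b2)^2).
  { pose proof (pow2_ge_0 (a1*b2 - a2*b1)); pose proof (pow2_ge_0 (a1*b3 - a3*b1));
    pose proof (pow2_ge_0 (a2*b3-a3*b2)); lra. }
  match goal with |- ?l <= ?r => assert (r - l =
   (a1*b2 - a2*b1)^2 + (a1*b3 - a3*b1)^2 + (a2*b3-a3*b2)^2) by ring end.
  lra.
Qed.

Lemma dot_le_norm a b : dot a b <= vnorm a * vnorm b.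
Proof.
  pose proof (CS a b). pose proof (vnorm_sq a). pose proof (vnorm_sq b).
  pose proof (vnorm_ge0 a). pose proof (vnorm_ge0 b).
  destruct (Rle_dec (dot a b) 0). nra.
  apply Rsqr_incr_0_var; unfold Rsqr; nra.
Qed.

Lemma dot_ge_mnorm a b : - (vnorm a * vnorm b) <= dot a b.
Proof.
  pose proof (CS a b). pose proof (vnorm_sq a). pose proof (vnorm_sq b).
  pose proof (vnorm_ge0 a). pose proof (vnorm_ge0 b).
  destruct (Rle_dec 0 (dot a b)). nra.
  assert (- dot a b <= vnorm a * vnorm b). apply Rsqr_incr_0_var; unfold Rsqr; nra. nra.
Qed.

Lemma vnorm_le_of_sq v c : dot v v <= c^2 -> 0 <= c -> vnorm v <= c.
Proof.
  intros H Hc. pose proof (vnorm_sq v). pose proof (vnorm_ge0 v).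
  apply Rsqr_incr_0_var; unfold Rsqr; nra.
Qed.

Lemma vnorm_sq_le v c : vnorm v <= c -> dot v v <= c^2.
Proof.
  intros H. pose proof (vnorm_sq v). pose proof (vnorm_ge0 v). nra.
Qed.

Lemma vnorm_add a b : vnorm (vadd a b) <= vnorm a + vnorm b.
Proof.
  apply vnorm_le_of_sq.
  - assert (dot (vadd a b) (vadd a b) = dot a a + 2 * dot a b + dot b b)
      by (vdestr; unfold dot, vadd; simpl; ring).
    pose proof (dot_le_norm a b). pose proof (vnorm_sq a). pose proof (vnorm_sq b). nra.
  - pose proof (vnorm_ge0 a). pose proof (vnorm_ge0 b). lra.
Qed.

Lemma vnorm_scale r a : 0 <= r -> vnorm (vscale r a) = r * vnorm a.
Proof.
  intros Hr. unfold vnorm. assert (dot (vscale r a) (vscale r a) = r^2 * dot a a)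
   by (destruct a; unfold dot, vscale; simpl; ring).
  rewrite H, sqrt_mult_alt by apply pow2_ge_0. rewrite sqrt_pow2 by lra. reflexivity.
Qed.

Lemma vnorm_unit_dot u : vnorm u = 1 -> dot u u = 1.
Proof. intros H. rewrite <- vnorm_sq, H. ring. Qed.

Lemma unit_dot_bound x y : vnorm x = 1 -> vnorm y = 1 -> -1 <= dot x y <= 1.
Proof.
  intros hx hy. pose proof (dot_le_norm x y). pose proof (dot_ge_mnorm x y).
  rewrite hx, hy in *. lra.
Qed.

Definition ang (x y : vec3) : R := acos (dot x y).

Lemma ang_bound x y : 0 <= ang x y <= PI.
Proof. apply acos_bound. Qed.

Lemma ang_sym x y : ang x y = ang y x.
Proof. unfold ang; rewrite dot_comm; reflexivity. Qed.

Lemma cos_ang x y : vnorm x = 1 -> vnorm y = 1 -> cos (ang x y) = dot x y.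
Proof. intros. apply cos_acos, unit_dot_bound; auto. Qed.

Lemma ang_le_of_dot x y b : vnorm x = 1 -> vnorm y = 1 -> 0 <= b <= PI ->
  cos b <= dot x y -> ang x y <= b.
Proof.
  intros hx hy hb h. pose proof (ang_bound x y).
  apply (cos_decr_0 b (ang x y)); try lra. rewrite cos_ang; auto.
Qed.

Lemma dot_le_of_ang x y b : vnorm x = 1 -> vnorm y = 1 -> 0 <= b <= PI ->
  b <= ang x y -> dot x y <= cos b.
Proof.
  intros hx hy hb h. pose proof (ang_bound x y). rewrite <- cos_ang by auto.
  apply cos_decr_1; lra.
Qed.

Lemma dot_ge_of_ang x y b : vnorm x = 1 -> vnorm y = 1 -> 0 <= b <= PI ->
  ang x y <= b -> cos b <= dot x y.
Proof.
  intros hx hy hb h. pose proof (ang_bound x y). rewrite <- cos_ang by auto.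
  apply cos_decr_1; lra.
Qed.

Lemma ang_eq x y b : 0 <= b <= PI -> dot x y = cos b -> ang x y = b.
Proof. intros hb h. unfold ang. rewrite h. apply acos_cos; lra. Qed.

Lemma sqrt_1m_sq c : -1 <= c <= 1 -> sqrt (1 - c²) * sqrt (1 - c²) = 1 - c^2.
Proof. intros h. rewrite sqrt_sqrt. unfold Rsqr; ring. unfold Rsqr; nra. Qed.

Lemma ang_tri x y z : vnorm x = 1 -> vnorm y = 1 -> vnorm z = 1 ->
  ang x z <= ang x y + ang y z.
Proof.
  intros hx hy hz.
  set (c1 := dot x y). set (c2 := dot y z).
  pose proof (unit_dot_bound x y hx hy) as b1. pose proof (unit_dot_bound y z hy hz) as b2.
  pose proof (ang_bound x y). pose proof (ang_bound y z). pose proof (ang_bound x z).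
  destruct (Rle_dec PI (ang x y + ang y z)). lra.
  set (x' := vsub x (vscale c1 y)). set (z' := vsub z (vscale c2 y)).
  assert (Hyy : dot y y = 1) by (apply vnorm_unit_dot; auto).
  assert (Hxx : dot x x = 1) by (apply vnorm_unit_dot; auto).
  assert (Hzz : dot z z = 1) by (apply vnorm_unit_dot; auto).
  assert (E1 : dot x' z' = dot x z - c1 * c2).
  { assert (dot x' z' = dot x z - c2 * dot x y - c1 * dot y z + c1 * c2 * dot y y).
    { unfold x', z'. destruct x, y, z; unfold dot, vsub, vscale; simpl; ring. }
    rewrite H2, Hyy. fold c1 c2. ring. }
  assert (E2 : dot x' x' = 1 - c1^2).
  { assert (dot x' x' = dot x x - 2 * c1 * dot x y + c1 * c1 * dot y y).
    { unfold x'. destruct x, y; unfold dot, vsub, vscale; simpl; ring. }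
    rewrite H2, Hyy, Hxx. fold c1. ring. }
  assert (E3 : dot z' z' = 1 - c2^2).
  { assert (dot z' z' = dot z z - 2 * c2 * dot y z + c2 * c2 * dot y y).
    { unfold z'. destruct z, y; unfold dot, vsub, vscale; simpl; ring. }
    rewrite H2, Hyy, Hzz. fold c2. ring. }
  pose proof (dot_ge_mnorm x' z') as HC.
  assert (Nx : vnorm x' = sin (ang x y)).
  { unfold ang, vnorm. rewrite sin_acos by exact b1. fold c1. rewrite E2. unfold Rsqr. f_equal. ring. }
  assert (Nz : vnorm z' = sin (ang y z)).
  { unfold ang, vnorm. rewrite sin_acos by exact b2. fold c2. rewrite E3. unfold Rsqr. f_equal. ring. }
  assert (Hc : cos (ang x y + ang y z) <= dot x z).
  { rewrite cos_plus. rewrite !cos_ang by auto. fold c1 c2. rewrite <- Nx, <- Nz. lra. }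
  apply (cos_decr_0 (ang x y + ang y z) (ang x z)); try lra.
  rewrite cos_ang; auto.
Qed.

Lemma angle_unit v u : vnorm v = 1 -> vnorm u = 1 -> angle v u = ang v u.
Proof. intros hv hu. unfold angle, ang. rewrite hv, hu. f_equal. field. Qed.

Lemma cone_dot alpha s u x : 0 <= alpha <= PI -> vnorm u = 1 -> cone alpha s u x ->
  cos alpha * vnorm (vsub x s) <= dot (vsub x s) u.
Proof.
  intros ha hu [r [v [hr [hv [hang ->]]]]].
  assert (E : vsub (vadd s (vscale r v)) s = vscale r v)
    by (destruct s, v; unfold vsub, vadd, vscale; simpl; f_equal; ring).
  rewrite E, vnorm_scale by auto. rewrite hv.
  rewrite angle_unit in hang by auto.
  pose proof (dot_ge_of_ang v u alpha hv hu ha hang).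
  assert (dot (vscale r v) u = r * dot v u) by (destruct u, v; unfold dot, vscale; simpl; ring).
  rewrite H0. nra.
Qed.

Lemma cone_of_dot alpha s u x : 0 <= alpha <= PI -> vnorm u = 1 ->
  0 < vnorm (vsub x s) ->
  cos alpha * vnorm (vsub x s) <= dot (vsub x s) u -> cone alpha s u x.
Proof.
  intros ha hu hpos h.
  exists (vnorm (vsub x s)), (vscale (/ vnorm (vsub x s)) (vsub x s)). split; [lra|].
  assert (hv : vnorm (vscale (/ vnorm (vsub x s)) (vsub x s)) = 1).
  { rewrite vnorm_scale. field; lra. left; apply Rinv_0_lt_compat; lra. }
  split; [exact hv|]. split.
  - rewrite angle_unit by auto. apply ang_le_of_dot; auto.
    assert (dot (vscale (/ vnorm (vsub x s)) (vsub x s)) u = / vnorm (vsub x s) * dot (vsub x s) u)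
      by (destruct u, (vsub x s); unfold dot, vscale; simpl; ring).
    rewrite H. apply (Rmult_le_reg_l (vnorm (vsub x s))); [lra|]. field_simplify; [|lra]. lra.
  - revert hpos. generalize (vnorm (vsub x s)). intros r hr.
    destruct x, s; unfold vsub, vadd, vscale; simpl. f_equal; field; lra.
Qed.

Definition xi (s u x : vec3) : vec3 := vsub (vsub x s) (vscale (dot (vsub x s) u) u).
Definition vneg (a : vec3) : vec3 := vscale (-1) a.

Lemma vnorm_neg a : vnorm (vneg a) = vnorm a.
Proof. unfold vnorm, vneg. f_equal. destruct a; unfold dot, vscale; simpl; ring. Qed.

Lemma vnorm_sub a b : vnorm (vsub a b) <= vnorm a + vnorm b.
Proof.
  replace (vsub a b) with (vadd a (vneg b)).
  rewrite <- (vnorm_neg b). apply vnorm_add.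
  destruct a, b; unfold vadd, vneg, vsub, vscale; simpl; f_equal; ring.
Qed.

Lemma xi_sq s u x : vnorm u = 1 ->
  dot (xi s u x) (xi s u x) = dot (vsub x s) (vsub x s) - (dot (vsub x s) u)^2.
Proof.
  intros hu. pose proof (vnorm_unit_dot u hu).
  unfold xi. destruct x, s, u; unfold dot, vsub, vscale in *; simpl in *.
  set (l := (vx - vx0) * vx1 + (vy - vy0) * vy1 + (vz - vz0) * vz1).
  transitivity ((vx - vx0) * (vx - vx0) + (vy - vy0) * (vy - vy0) + (vz - vz0) * (vz - vz0)
   - 2 * l * l + l * l * (vx1 * vx1 + vy1 * vy1 + vz1 * vz1)).
  unfold l; ring. rewrite H. ring.
Qed.

Lemma xi_bound ca sa s u x : 0 < ca -> 0 <= sa -> ca^2 + sa^2 = 1 -> vnorm u = 1 ->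
  ca * vnorm (vsub x s) <= dot (vsub x s) u ->
  0 <= dot (vsub x s) u /\ vnorm (xi s u x) <= (sa/ca) * dot (vsub x s) u.
Proof.
  intros hc hs h1 hu h.
  pose proof (xi_sq s u x hu) as E.
  revert h E. generalize (xi s u x) (vsub x s). intros z w h E.
  pose proof (vnorm_ge0 w). pose proof (vnorm_sq w).
  assert (hl : 0 <= dot w u) by (clear E; nra). split; auto.
  apply vnorm_le_of_sq.
  - rewrite E.
    assert (ca^2 * dot w w <= (dot w u)^2).
    { assert (0 <= (dot w u - ca * vnorm w) * (dot w u + ca * vnorm w)).
      apply Rmult_le_pos; nra. nra. }
    apply (Rmult_le_reg_l (ca^2)). nra.
    replace (ca ^ 2 * ((sa / ca * dot w u) ^ 2)) with (sa^2 * (dot w u)^2) by (field; lra).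
    nra.
  - apply Rmult_le_pos; auto. unfold Rdiv; apply Rmult_le_pos; [lra| left; apply Rinv_0_lt_compat; lra].
Qed.

Definition mid (p q : vec3) : vec3 := vscale (/2) (vadd p q).

Lemma vnorm_half_add x y : vnorm (vscale (/2) (vadd x y)) <= (vnorm x + vnorm y) / 2.
Proof.
  rewrite vnorm_scale by lra. pose proof (vnorm_add x y). lra.
Qed.

Lemma mid_bound ca sa s u p q : 0 < ca -> 0 <= sa -> ca^2 + sa^2 = 1 -> vnorm u = 1 ->
  ca * vnorm (vsub p s) <= dot (vsub p s) u ->
  ca * vnorm (vsub q s) <= dot (vsub q s) u ->
  dot (vsub (mid p q) s) u = (dot (vsub p s) u + dot (vsub q s) u) / 2 /\
  0 <= dot (vsub (mid p q) s) u /\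
  vnorm (xi s u (mid p q)) <= (sa/ca) * dot (vsub (mid p q) s) u.
Proof.
  intros hc hs h1 hu hp hq.
  destruct (xi_bound ca sa s u p hc hs h1 hu hp) as [lp xp].
  destruct (xi_bound ca sa s u q hc hs h1 hu hq) as [lq xq].
  assert (E1 : dot (vsub (mid p q) s) u = (dot (vsub p s) u + dot (vsub q s) u) / 2)
    by (unfold mid; destruct p, q, s, u; unfold dot, vsub, vscale, vadd; simpl; field).
  assert (E2 : xi s u (mid p q) = vscale (/2) (vadd (xi s u p) (xi s u q))).
  { unfold xi, mid.
    destruct p, q, s, u; unfold dot, vsub, vscale, vadd; simpl; f_equal; field. }
  rewrite E1. split; [reflexivity|]. split; [lra|].
  rewrite E2. eapply Rle_trans; [apply vnorm_half_add|].
  assert (0 <= sa/ca) by (unfold Rdiv; apply Rmult_le_pos; [lra| left; apply Rinv_0_lt_compat; lra]).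
  lra.
Qed.

Lemma perp_diff ca sa s u p q : 0 < ca -> 0 <= sa -> ca^2 + sa^2 = 1 -> vnorm u = 1 ->
  ca * vnorm (vsub p s) <= dot (vsub p s) u ->
  ca * vnorm (vsub q s) <= dot (vsub q s) u ->
  dot (vsub p q) (vsub p q) - (dot (vsub p q) u)^2 <=
    4 * (sa/ca)^2 * (dot (vsub (mid p q) s) u)^2.
Proof.
  intros hc hs h1 hu hp hq.
  destruct (xi_bound ca sa s u p hc hs h1 hu hp) as [lp xp].
  destruct (xi_bound ca sa s u q hc hs h1 hu hq) as [lq xq].
  destruct (mid_bound ca sa s u p q hc hs h1 hu hp hq) as [E1 _].
  assert (E : vsub (vsub p q) (vscale (dot (vsub p q) u) u) = vsub (xi s u p) (xi s u q)).
  { unfold xi. destruct p, q, s, u; unfold dot, vsub, vscale; simpl; f_equal; ring. }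
  assert (Hn : vnorm (vsub (xi s u p) (xi s u q)) <= (sa/ca) * (2 * dot (vsub (mid p q) s) u)).
  { eapply Rle_trans; [apply vnorm_sub|]. rewrite E1. lra. }
  rewrite <- E in Hn. apply vnorm_sq_le in Hn.
  assert (dot (vsub (vsub p q) (vscale (dot (vsub p q) u) u)) (vsub (vsub p q) (vscale (dot (vsub p q) u) u))
     = dot (vsub p q) (vsub p q) - (dot (vsub p q) u)^2).
  { pose proof (vnorm_unit_dot u hu). revert H. generalize (vsub p q). intros d H.
    destruct d, u; unfold dot, vsub, vscale in *; simpl in *.
    set (l := vx * vx0 + vy * vy0 + vz * vz0).
    transitivity (vx*vx+vy*vy+vz*vz - 2*l*l + l*l*(vx0 * vx0 + vy0 * vy0 + vz0 * vz0)).
    unfold l; ring. rewrite H; ring. }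
  rewrite H in Hn. nra.
Qed.

Lemma gram2 d u1 u2 : vnorm u1 = 1 -> vnorm u2 = 1 -> dot u1 u2 <= 0 ->
  (dot d u1)^2 + (dot d u2)^2 <= (1 - dot u1 u2) * dot d d.
Proof.
  intros h1 h2 hk.
  pose proof (vnorm_unit_dot u1 h1). pose proof (vnorm_unit_dot u2 h2).
  set (k := dot u1 u2) in *. set (P1 := dot d u1). set (P2 := dot d u2).
  set (x := P1 / (1 - k)). set (y := P2 / (1-k)).
  assert (E : dot (vsub d (vadd (vscale x u1) (vscale y u2))) (vsub d (vadd (vscale x u1) (vscale y u2)))
    = dot d d - 2*x*P1 - 2*y*P2 + x^2 * dot u1 u1 + y^2 * dot u2 u2 + 2*x*y*k).
  { unfold P1, P2, k. destruct d, u1, u2; unfold dot, vsub, vadd, vscale; simpl; ring. }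
  rewrite H, H0 in E.
  pose proof (dot_self_ge0 (vsub d (vadd (vscale x u1) (vscale y u2)))). rewrite E in H1.
  assert (Hk1 : 0 < 1 - k) by lra.
  assert (Hx : P1 = x * (1-k)) by (unfold x; field; lra).
  assert (Hy : P2 = y * (1-k)) by (unfold y; field; lra).
  rewrite Hx, Hy.
  rewrite Hx, Hy in H1. clearbody k P1 P2 x y.
  assert (0 <= - k * (x + y)^2) by (pose proof (pow2_ge_0 (x+y)); clear - hk H2; nra).
  assert (0 <= dot d d - (x^2 + y^2) * (1-k)) by nra.
  assert (0 <= (1-k) * (dot d d - (x^2 + y^2) * (1-k))) by (apply Rmult_le_pos; lra).
  nra.
Qed.

Lemma dot_abs_le_unit x u : vnorm u = 1 -> Rabs (dot x u) <= vnorm x.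
Proof.
  intros hu. pose proof (dot_le_norm x u). pose proof (dot_ge_mnorm x u). rewrite hu in *.
  apply Rabs_le; lra.
Qed.

Lemma core ca sa s1 s2 u1 u2 p q : 0 < ca -> 0 <= sa -> ca^2 + sa^2 = 1 ->
  vnorm u1 = 1 -> vnorm u2 = 1 -> dot u1 u2 <= 0 ->
  ca * vnorm (vsub p s1) <= dot (vsub p s1) u1 ->
  ca * vnorm (vsub q s1) <= dot (vsub q s1) u1 ->
  ca * vnorm (vsub p s2) <= dot (vsub p s2) u2 ->
  ca * vnorm (vsub q s2) <= dot (vsub q s2) u2 ->
  let a := sa / ca in
  let l1 := dot (vsub (mid p q) s1) u1 in
  let l2 := dot (vsub (mid p q) s2) u2 in
  let k := dot u1 u2 in
  let D := dot (vsub p q) (vsub p q) in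
  0 <= l1 /\ 0 <= l2 /\
  D * (1 + k) <= 4 * a^2 * (l1^2 + l2^2) /\
  l1^2 + l2^2 - 2 * k * l1 * l2 <= (vnorm (vsub s2 s1) + a * (l1 + l2))^2 /\
  Rabs (l1 - l2) * (1 + k) <= Rabs (dot (vsub s2 s1) (vadd u1 u2)) + a * (l1 + l2).
Proof.
  intros hc hs h1 hu1 hu2 hk hp1 hq1 hp2 hq2 a l1 l2 k D.
  destruct (mid_bound ca sa s1 u1 p q hc hs h1 hu1 hp1 hq1) as [_ [L1 X1]].
  destruct (mid_bound ca sa s2 u2 p q hc hs h1 hu2 hp2 hq2) as [_ [L2 X2]].
  fold l1 in L1, X1. fold l2 in L2, X2. fold a in X1, X2.
  pose proof (perp_diff ca sa s1 u1 p q hc hs h1 hu1 hp1 hq1) as P1.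
  pose proof (perp_diff ca sa s2 u2 p q hc hs h1 hu2 hp2 hq2) as P2.
  fold l1 in P1. fold l2 in P2. fold a in P1, P2. fold D in P1, P2.
  pose proof (gram2 (vsub p q) u1 u2 hu1 hu2 hk) as G. fold k D in G.
  assert (ha : 0 <= a) by (unfold a, Rdiv; apply Rmult_le_pos; [lra| left; apply Rinv_0_lt_compat; lra]).
  pose proof (vnorm_unit_dot u1 hu1) as U1. pose proof (vnorm_unit_dot u2 hu2) as U2.
  pose proof (unit_dot_bound u1 u2 hu1 hu2) as KB. fold k in KB.
  set (m := mid p q) in *.
  set (x1 := xi s1 u1 m) in *. set (x2 := xi s2 u2 m) in *.
  set (V := vsub (vscale l1 u1) (vscale l2 u2)).
  assert (EV : V = vadd (vsub (vsub s2 s1) x1) x2).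
  { unfold V, x1, x2, xi, l1, l2. destruct m, s1, s2, u1, u2; unfold vsub, vadd, vscale, dot; simpl; f_equal; ring. }
  assert (NV : vnorm V <= vnorm (vsub s2 s1) + a * (l1 + l2)).
  { rewrite EV. eapply Rle_trans. apply vnorm_add.
    pose proof (vnorm_sub (vsub s2 s1) x1). lra. }
  assert (DV : dot V V = l1^2 + l2^2 - 2 * k * l1 * l2).
  { unfold V, k. revert U1 U2. generalize l1 l2. intros z1 z2 U1 U2.
    transitivity (z1^2 * dot u1 u1 + z2^2 * dot u2 u2 - 2 * z1 * z2 * dot u1 u2).
    destruct u1, u2; unfold vsub, vscale, dot; simpl; ring. rewrite U1, U2; ring. }
  split; [lra|]. split; [lra|]. split; [nra|]. split.
  - rewrite <- DV. apply vnorm_sq_le in NV. exact NV.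
  - assert (D1 : dot V (vadd u1 u2) = (l1 - l2) * (1 + k)).
    { unfold V, k. revert U1 U2. generalize l1 l2. intros z1 z2 U1 U2.
      transitivity (z1 * dot u1 u1 + z1 * dot u1 u2 - z2 * dot u1 u2 - z2 * dot u2 u2).
      destruct u1, u2; unfold vsub, vscale, vadd, dot; simpl; ring. rewrite U1, U2; ring. }
    assert (O1 : dot x1 u1 = 0).
    { unfold x1, xi, l1. transitivity (dot (vsub m s1) u1 * (1 - dot u1 u1)).
      destruct m, s1, u1; unfold vsub, vscale, dot; simpl; ring. rewrite U1; ring. }
    assert (O2 : dot x2 u2 = 0).
    { unfold x2, xi, l2. transitivity (dot (vsub m s2) u2 * (1 - dot u2 u2)).
      destruct m, s2, u2; unfold vsub, vscale, dot; simpl; ring. rewrite U2; ring. }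
    assert (D2 : dot V (vadd u1 u2) = dot (vsub s2 s1) (vadd u1 u2) - dot x1 u2 + dot x2 u1).
    { rewrite EV. transitivity (dot (vsub s2 s1) (vadd u1 u2) - dot x1 u1 - dot x1 u2 + dot x2 u1 + dot x2 u2).
      destruct s1, s2, x1, x2, u1, u2; unfold vsub, vadd, dot; simpl; ring. rewrite O1, O2; ring. }
    pose proof (dot_abs_le_unit x1 u2 hu2). pose proof (dot_abs_le_unit x2 u1 hu1).
    assert (Rabs ((l1 - l2) * (1 + k)) <= Rabs (dot (vsub s2 s1) (vadd u1 u2)) + a * (l1 + l2)).
    { rewrite <- D1, D2. eapply Rle_trans. apply Rabs_triang.
      eapply Rle_trans. apply Rplus_le_compat_r. apply Rabs_triang.
      rewrite Rabs_Ropp. lra. }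
    rewrite Rabs_mult, (Rabs_right (1+k)) in H1 by lra. exact H1.
Qed.

Lemma trig_basic alpha : 0 <= alpha < 1/4 ->
  0 < cos alpha /\ 0 <= sin alpha /\ sin alpha <= alpha /\ (cos alpha)^2 + (sin alpha)^2 = 1
  /\ sin alpha < cos alpha.
Proof.
  intros ha. pose proof PI2_3_2.
  assert (c : 0 < cos alpha) by (apply cos_gt_0; lra).
  assert (s : 0 <= sin alpha) by (apply sin_ge_0; lra).
  assert (s2 : sin alpha <= alpha).
  { destruct (Req_dec alpha 0) as [->|]. rewrite sin_0; lra. left; apply sin_lt_x; lra. }
  assert (e : (cos alpha)^2 + (sin alpha)^2 = 1) by (pose proof (sin2_cos2 alpha); unfold Rsqr in *; nra).
  repeat split; auto. nra.
Qed.

Lemma cos_PI2_plus x : cos (PI/2 + x) = - sin x.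
Proof. rewrite cos_plus, cos_PI2, sin_PI2. ring. Qed.

Lemma cam_facts alpha u1 u2 : 0 <= alpha < 1/4 ->
  let ca := cos alpha in let sa := sin alpha in
  let T := (ca + sa) / (ca - sa) in let r0 := sqrt (1 + T^2) in
  vnorm u1 = 1 -> vnorm u2 = 1 ->
  ca <= dot (mkV (T/r0) 0 (-1/r0)) u1 -> ca <= dot (mkV (-T/r0) 0 (-1/r0)) u2 ->
  dot u1 u2 <= 0 /\ - (4 * sa * ca * (ca^2 - sa^2)) <= dot u1 u2 /\
  Rabs (vx u1 + vx u2) <= (T * (1 - ca) + 2 * sa) / r0.
Proof.
  intros ha ca sa T r0 hu1 hu2 h1 h2.
  destruct (trig_basic alpha ha) as [hc [hs [hsa [hcs hlt]]]]. fold ca sa in hc, hs, hsa, hcs, hlt.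
  pose proof PI2_3_2 as hpi.
  assert (hT : 0 < T) by (unfold T; apply Rdiv_lt_0_compat; lra).
  assert (hr0 : 0 < r0) by (unfold r0; apply sqrt_lt_R0; nra).
  assert (hr2 : r0 * r0 = 1 + T^2) by (unfold r0; apply sqrt_sqrt; nra).
  set (d1 := mkV (T/r0) 0 (-1/r0)) in *. set (d2 := mkV (-T/r0) 0 (-1/r0)) in *.
  assert (n1 : vnorm d1 = 1).
  { unfold vnorm, d1, dot; simpl. replace (T / r0 * (T / r0) + 0 * 0 + -1 / r0 * (-1 / r0)) with 1.
    apply sqrt_1. transitivity ((1+T^2)/(r0*r0)). rewrite hr2; field; nra. field; lra. }
  assert (n2 : vnorm d2 = 1).
  { unfold vnorm, d2, dot; simpl. replace (- T / r0 * (- T / r0) + 0 * 0 + -1 / r0 * (-1 / r0)) with 1.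
    apply sqrt_1. transitivity ((1+T^2)/(r0*r0)). rewrite hr2; field; nra. field; lra. }
  assert (d12 : dot d1 d2 = cos (PI/2 + 2*alpha)).
  { rewrite cos_PI2_plus, sin_2a. fold ca sa. unfold d1, d2, dot; simpl.
    transitivity ((1 - T^2) / (r0 * r0)). field; lra. rewrite hr2. unfold T.
    assert (ne : (ca - sa) ^ 2 + (ca + sa) ^ 2 <> 0) by nra.
    field_simplify; [|split; lra].
    replace (2 * ca ^ 2 + 2 * sa ^ 2) with 2 by lra. field. }
  assert (a1 : ang u1 d1 <= alpha).
  { apply ang_le_of_dot; auto. lra. rewrite dot_comm; fold ca; lra. }
  assert (a2 : ang u2 d2 <= alpha).
  { apply ang_le_of_dot; auto. lra. rewrite dot_comm; fold ca; lra. }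
  assert (a12 : ang d1 d2 = PI/2 + 2*alpha) by (apply ang_eq; [lra| exact d12]).
  pose proof (ang_tri d1 u1 d2 n1 hu1 n2) as t1.
  pose proof (ang_tri u1 u2 d2 hu1 hu2 n2) as t2.
  pose proof (ang_tri u1 d1 d2 hu1 n1 n2) as t3.
  pose proof (ang_tri u1 d2 u2 hu1 n2 hu2) as t4.
  rewrite (ang_sym d1 u1) in t1. rewrite (ang_sym d2 u2) in t4.
  pose proof (ang_bound u1 u2).
  split; [|split].
  - rewrite <- cos_PI2. apply dot_le_of_ang; auto. lra. lra.
  - replace (- (4 * sa * ca * (ca ^ 2 - sa ^ 2))) with (cos (PI/2 + 4 * alpha)).
    apply dot_ge_of_ang; auto. lra. lra.
    rewrite cos_PI2_plus. replace (4 * alpha) with (2 * (2 * alpha)) by ring.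
    rewrite sin_2a, sin_2a, cos_2a. fold ca sa. ring.
  - destruct u1 as [x1 y1 z1], u2 as [x2 y2 z2]. simpl.
    unfold d1, d2, dot in h1, h2; simpl in h1, h2.
    pose proof (vnorm_unit_dot _ hu1) as U1. pose proof (vnorm_unit_dot _ hu2) as U2.
    unfold dot in U1, U2; simpl in U1, U2.
    set (p1 := (T * x1 - z1) / r0). set (q1 := (x1 + T * z1) / r0).
    set (p2 := (- T * x2 - z2) / r0). set (q2 := (- x2 + T * z2) / r0).
    assert (e1 : x1 = (T * p1 + q1) / r0).
    { unfold p1, q1. transitivity (x1 * (1+T^2)/(r0*r0)). rewrite hr2; field; nra. field; lra. }
    assert (e2 : - x2 = (T * p2 + q2) / r0).
    { unfold p2, q2. transitivity (- x2 * (1+T^2)/(r0*r0)). rewrite hr2; field; nra. field; lra. }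
    assert (f1 : p1^2 + q1^2 <= 1).
    { assert (p1^2 + q1^2 = x1^2 + z1^2).
      { unfold p1, q1. transitivity ((x1^2+z1^2) * (1+T^2)/(r0*r0)). field; lra. rewrite hr2; field; nra. }
      nra. }
    assert (f2 : p2^2 + q2^2 <= 1).
    { assert (p2^2 + q2^2 = x2^2 + z2^2).
      { unfold p2, q2. transitivity ((x2^2+z2^2) * (1+T^2)/(r0*r0)). field; lra. rewrite hr2; field; nra. }
      nra. }
    assert (g1 : ca <= p1) by (unfold p1; lra).
    assert (g2 : ca <= p2) by (unfold p2; lra).
    clearbody p1 q1 p2 q2.
    assert (Q1 : q1^2 <= sa^2) by nra. assert (Q2 : q2^2 <= sa^2) by nra.
    assert (R1 : - sa <= q1 <= sa) by (split; nra).
    assert (R2 : - sa <= q2 <= sa) by (split; nra).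
    assert (P1 : p1 <= 1) by nra. assert (P2 : p2 <= 1) by nra.
    replace (x1 + x2) with (x1 - (- x2)) by ring. rewrite e1, e2.
    apply Rabs_le. split.
    + apply (Rmult_le_reg_l r0); auto. field_simplify; [|lra|lra]. nra.
    + apply (Rmult_le_reg_l r0); auto. field_simplify; [|lra|lra]. nra.
Qed.

Definition nrm (v : vec3) : vec3 := vscale (/ vnorm v) v.

Lemma nrm_unit v : 0 < vnorm v -> vnorm (nrm v) = 1.
Proof. intros h. unfold nrm. rewrite vnorm_scale. field; lra. left; apply Rinv_0_lt_compat; lra. Qed.

Lemma dot_nrm_l v w : dot (nrm v) w = dot v w / vnorm v.
Proof. unfold nrm, Rdiv. destruct v, w; unfold dot, vscale; simpl. ring. Qed.

Lemma bisector v1 v2 ca : vnorm v1 = 1 -> vnorm v2 = 1 -> 0 < ca ->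
  2 * ca^2 - 1 <= dot v1 v2 ->
  vnorm (nrm (vadd v1 v2)) = 1 /\ ca <= dot v1 (nrm (vadd v1 v2)) /\ ca <= dot v2 (nrm (vadd v1 v2)).
Proof.
  intros h1 h2 hc hd.
  pose proof (vnorm_unit_dot v1 h1). pose proof (vnorm_unit_dot v2 h2).
  set (c := dot v1 v2) in *.
  assert (E : dot (vadd v1 v2) (vadd v1 v2) = 2 + 2 * c).
  { unfold c. transitivity (dot v1 v1 + dot v2 v2 + 2 * dot v1 v2).
    destruct v1, v2; unfold dot, vadd; simpl; ring. rewrite H, H0. ring. }
  assert (hc2 : 0 < 2 + 2 * c) by nra.
  assert (N : vnorm (vadd v1 v2) = sqrt (2 + 2 * c)) by (unfold vnorm; rewrite E; reflexivity).
  assert (Np : 0 < vnorm (vadd v1 v2)) by (rewrite N; apply sqrt_lt_R0; lra).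
  assert (S2 : sqrt (2 + 2*c) * sqrt (2 + 2*c) = 2 + 2*c) by (apply sqrt_sqrt; lra).
  assert (key : ca * sqrt (2 + 2*c) <= 1 + c).
  { apply Rsqr_incr_0_var. unfold Rsqr. replace (ca * sqrt (2 + 2 * c) * (ca * sqrt (2 + 2 * c)))
      with (ca^2 * (2 + 2*c)).
    nra. transitivity (ca^2 * (sqrt (2 + 2 * c) * sqrt (2 + 2 * c))). rewrite S2; ring. ring. lra. }
  split; [apply nrm_unit; auto|]. split.
  - rewrite dot_comm, dot_nrm_l, N.
    assert (dot (vadd v1 v2) v1 = 1 + c).
    { unfold c. transitivity (dot v1 v1 + dot v1 v2). destruct v1, v2; unfold dot, vadd; simpl; ring. rewrite H; ring. }
    rewrite H1. rewrite <- N in *. apply (Rmult_le_reg_l (vnorm (vadd v1 v2))); auto.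
    field_simplify; [|lra]. rewrite N in *. lra.
  - rewrite dot_comm, dot_nrm_l, N.
    assert (dot (vadd v1 v2) v2 = 1 + c).
    { unfold c. transitivity (dot v2 v2 + dot v1 v2). destruct v1, v2; unfold dot, vadd; simpl; ring. rewrite H0; ring. }
    rewrite H1. rewrite <- N in *. apply (Rmult_le_reg_l (vnorm (vadd v1 v2))); auto.
    field_simplify; [|lra]. rewrite N in *. lra.
Qed.

Lemma lb_ineq ca sa h X Y : 0 < ca -> 0 <= sa -> sa < ca -> ca^2 + sa^2 = 1 -> 0 < h ->
  let b := h * (4 * sa * ca / (ca - sa)^2) in
  (ca^2 - sa^2) * (sqrt (X^2 + Y^2 + h^2) * sqrt (X^2 + Y^2 + (h+b)^2)) <= X^2 + Y^2 + h*(h+b).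
Proof.
  intros hc hs hl e hh b.
  set (S := 2 * sa * ca). set (C := ca^2 - sa^2). set (P := X^2 + Y^2).
  assert (hP : 0 <= P) by (unfold P; nra).
  assert (hS : 0 <= S) by (unfold S; nra).
  assert (hSC : S^2 + C^2 = 1) by (unfold S, C; nra).
  assert (h1S : 1 - S = (ca - sa)^2) by (unfold S; nra).
  assert (hb : b * (1 - S) = 2 * h * S) by (rewrite h1S; unfold b, S; field; lra).
  assert (hb0 : 0 <= b) by (unfold b; apply Rmult_le_pos; [lra| apply Rmult_le_pos; [nra| left; apply Rinv_0_lt_compat; nra]]).
  assert (hC : 0 <= C) by (unfold C; nra).
  set (H := h * (h + b)).
  assert (key : C^2 * b^2 = 4 * S^2 * H).
  { unfold H. replace (C^2) with ((1 - S) * (1 + S)) by nra.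
    transitivity (b * (1 + S) * (b * (1 - S))). ring. rewrite hb.
    assert (2 * h * S * b * (1 - S) = 4 * S^2 * h^2) by (transitivity (2*h*S*(b*(1-S))); [ring| rewrite hb; ring]).
    nra. }
  assert (prod : (P + h^2) * (P + (h+b)^2) = (P + H)^2 + P * b^2) by (unfold H; ring).
  assert (amgm : 4 * P * H <= (P + H)^2) by (pose proof (pow2_ge_0 (P - H)); nra).
  assert (hH : 0 <= H) by (unfold H; nra).
  assert (sq : C^2 * ((P + h^2) * (P + (h+b)^2)) <= (P + H)^2).
  { rewrite prod. assert (C^2 * (P * b^2) = P * (4 * S^2 * H)) by (rewrite <- key; ring).
    assert (S^2 * (4 * P * H) <= S^2 * (P + H)^2) by (apply Rmult_le_compat_l; nra). nra. }
  rewrite <- sqrt_mult by nra.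
  fold P. replace (X ^ 2 + Y ^ 2 + h * (h + b)) with (P + H) by (unfold P, H; ring).
  assert (0 <= (P + h ^ 2) * (P + (h + b) ^ 2)) by nra.
  apply Rsqr_incr_0_var. unfold Rsqr.
  replace (C * sqrt ((P + h ^ 2) * (P + (h + b) ^ 2)) * (C * sqrt ((P + h ^ 2) * (P + (h + b) ^ 2))))
    with (C^2 * (sqrt ((P + h ^ 2) * (P + (h + b) ^ 2)) * sqrt ((P + h ^ 2) * (P + (h + b) ^ 2)))) by ring.
  rewrite sqrt_sqrt by auto. nra. nra.
Qed.

Lemma lower_bound h alpha g E : 0 < h -> 0 <= alpha < 1/4 -> ground g ->
  eps_le alpha g (view_plane h) E ->
  h * (4 * sin alpha * cos alpha / (cos alpha - sin alpha)^2) <= E.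
Proof.
  intros hh ha hg heps.
  destruct (trig_basic alpha ha) as [hc [hs [hsa [hcs hlt]]]].
  set (ca := cos alpha) in *. set (sa := sin alpha) in *.
  set (b := h * (4 * sa * ca / (ca - sa)^2)).
  assert (hb0 : 0 <= b) by (unfold b; apply Rmult_le_pos; [lra| apply Rmult_le_pos; [nra| left; apply Rinv_0_lt_compat; nra]]).
  set (y0 := vadd g (mkV 0 0 (- b))).
  set (u := fun s => nrm (vadd (nrm (vsub g s)) (nrm (vsub y0 s)))).
  pose proof PI2_3_2 as hpi.
  assert (hA : 0 <= alpha <= PI) by lra.
  assert (key : forall s, view_plane h s ->
     vnorm (u s) = 1 /\ cone alpha s (u s) g /\ cone alpha s (u s) y0).
  { intros s hs'. unfold view_plane in hs'. unfold ground in hg.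
    set (X := vx g - vx s). set (Y := vy g - vy s).
    assert (Wg : vsub g s = mkV X Y (-h)).
    { unfold X, Y. destruct g, s; unfold vsub; simpl in *. f_equal; lra. }
    assert (Wy : vsub y0 s = mkV X Y (-h - b)).
    { unfold X, Y, y0. destruct g, s; unfold vsub, vadd; simpl in *. f_equal; lra. }
    assert (Ng : vnorm (vsub g s) = sqrt (X^2 + Y^2 + h^2)).
    { rewrite Wg. unfold vnorm, dot; simpl. f_equal. ring. }
    assert (Ny : vnorm (vsub y0 s) = sqrt (X^2 + Y^2 + (h+b)^2)).
    { rewrite Wy. unfold vnorm, dot; simpl. f_equal. ring. }
    assert (Pg : 0 < vnorm (vsub g s)) by (rewrite Ng; apply sqrt_lt_R0; nra).
    assert (Py : 0 < vnorm (vsub y0 s)) by (rewrite Ny; apply sqrt_lt_R0; nra).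
    assert (Dgy : dot (vsub g s) (vsub y0 s) = X^2 + Y^2 + h * (h + b)).
    { rewrite Wg, Wy. unfold dot; simpl. ring. }
    pose proof (lb_ineq ca sa h X Y hc hs hlt hcs hh) as LB. cbv zeta in LB. fold b in LB.
    rewrite <- Ng, <- Ny, <- Dgy in LB.
    assert (Dn : 2 * ca^2 - 1 <= dot (nrm (vsub g s)) (nrm (vsub y0 s))).
    { assert (E1 : dot (nrm (vsub g s)) (nrm (vsub y0 s)) = dot (vsub g s) (vsub y0 s) / (vnorm (vsub g s) * vnorm (vsub y0 s))).
      { rewrite dot_nrm_l, dot_comm, dot_nrm_l, dot_comm. field; lra. }
      rewrite E1. replace (2 * ca^2 - 1) with (ca^2 - sa^2) by lra.
      apply (Rmult_le_reg_r (vnorm (vsub g s) * vnorm (vsub y0 s))). nra.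
      unfold Rdiv. rewrite Rmult_assoc, Rinv_l, Rmult_1_r by nra. lra. }
    destruct (bisector _ _ ca (nrm_unit _ Pg) (nrm_unit _ Py) hc Dn) as [U [B1 B2]].
    fold (u s) in U, B1, B2.
    split; [exact U|]. split.
    - apply cone_of_dot; auto. fold ca.
      rewrite dot_nrm_l in B1.
      replace (dot (vsub g s) (u s)) with (vnorm (vsub g s) * (dot (vsub g s) (u s) / vnorm (vsub g s))) by (field; lra).
      nra.
    - apply cone_of_dot; auto. fold ca.
      rewrite dot_nrm_l in B2.
      replace (dot (vsub y0 s) (u s)) with (vnorm (vsub y0 s) * (dot (vsub y0 s) (u s) / vnorm (vsub y0 s))) by (field; lra).
      nra. }
  assert (adm : admissible_axes alpha g (view_plane h) u).
  { intros s hs'. destruct (key s hs') as [k1 [k2 _]]. auto. }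
  pose proof (heps u adm g y0) as D.
  assert (D' : Defs.dist g y0 <= E).
  { apply D; intros s hs'; destruct (key s hs') as [_ [k2 k3]]; auto. }
  unfold Defs.dist in D'. replace (vsub g y0) with (mkV 0 0 b) in D'.
  unfold vnorm, dot in D'; simpl in D'.
  replace (0 * 0 + 0 * 0 + b * b) with (b^2) in D' by ring. rewrite sqrt_pow2 in D' by lra.
  fold b. lra.
  unfold y0. destruct g; unfold vsub, vadd; simpl. f_equal; ring.
Qed.

Definition Q0i (a:R) := (304584000) + (-4132444400) * a + (18403576800) * a^2 + (-23728335680) * a^3 + (-74720319956) * a^4 + (325421172948) * a^5 + (-231301487641) * a^6 + (-522220306414) * a^7 + (550098734184) * a^8 + (671317557356) * a^9 + (-529989844511) * a^10 + (-1065707589476) * a^11 + (879461343516) * a^12 + (342730863410) * a^13 + (-434349533122) * a^14 + (276633310756) * a^15 + (-366079081960) * a^16 + (268453202952) * a^17 + (-33343723558) * a^18 + (-122705950472) * a^19 + (173876835884) * a^20 + (-147931197496) * a^21 + (78370099531) * a^22 + (-17669928870) * a^23 + (-12866125536) * a^24 + (18383030028) * a^25 + (-12220857099) * a^26 + (5184297756) * a^27 + (-1424398932) * a^28 + (192119202) * a^29.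

Lemma Q0i_0_y (y : R) : 0 <= y <= 48 -> 0 < (391558093818064235268538385546912536101298141326670538357947446067200000000000000000000000000000000) + (-4150363826340635321136148883442200178926439773325585667875808477184000000000000000000000000000000) * y + (14440140483575257141791826654828748904690056885386499249491515801600000000000000000000000000000) * y^2 + (-14545427448707587477079532796061044049876879611808418809482575872000000000000000000000000000) * y^3 + (-35783924107700777744647267116235162845099169102141666239793070080000000000000000000000000) * y^4 + (121754515733925102502338360176191996199723240325635670684991488000000000000000000000000) * y^5 + (-67609500580879021112452088251036897866080968232298593071923200000000000000000000000) * y^6 + (-119254036386172941102439854969528382883104105850912647413760000000000000000000000) * y^7 + (98140893640572892535356288764856821230251670299949924352000000000000000000000) * y^8 + (93568011211850770048377034108882960445690190344329625600000000000000000000) * y^9 + (-57710783594964232345969012075554719818034562853765120000000000000000000) * y^10 + (-90660375248125272542321062824624373943784402059264000000000000000000) * y^11 + (58450231950604104927550802873269912020819168460800000000000000000) * y^12 + (17795603854066721006817797564294391140030873600000000000000000) * y^13 + (-17619310283870544229913808808872527374843904000000000000000) * y^14 + (8766859560574142713697334733057007445606400000000000000) * y^15 + (-9063679062062366909691276550598347980800000000000000) * y^16 + (5192640134510703812249877291133304832000000000000) * y^17 + (-503876104141984616176055230241177600000000000) * y^18 + (-1448656169394088805059983080161280000000000) * y^19 + (1603730745949272652709229494272000000000) * y^20 + (-1065956617471130961503164825600000000) * y^21 + (441184438806000354166046720000000) * y^22 + (-77713169018159345172480000000) * y^23 + (-44207670722680376524800000) * y^24 + (49346570482278727680000) * y^25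 + (-25628994906882048000) * y^26 + (8493953443430400) * y^27 + (-1823230632960) * y^28 + (192119202) * y^29.
Proof.
  intros Hy.
  assert (y^1 <= 48^1) by (apply pow_incr; lra).
  assert (0 <= y^2) by (apply pow_le; lra).
  assert (y^3 <= 48^3) by (apply pow_incr; lra).
  assert (y^4 <= 48^4) by (apply pow_incr; lra).
  assert (0 <= y^5) by (apply pow_le; lra).
  assert (y^6 <= 48^6) by (apply pow_incr; lra).
  assert (y^7 <= 48^7) by (apply pow_incr; lra).
  assert (0 <= y^8) by (apply pow_le; lra).
  assert (0 <= y^9) by (apply pow_le; lra).
  assert (y^10 <= 48^10) by (apply pow_incr; lra).
  assert (y^11 <= 48^11) by (apply pow_incr; lra).
  assert (0 <= y^12) by (apply pow_le; lra).
  assert (0 <= y^13) by (apply pow_le; lra).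
  assert (y^14 <= 48^14) by (apply pow_incr; lra).
  assert (0 <= y^15) by (apply pow_le; lra).
  assert (y^16 <= 48^16) by (apply pow_incr; lra).
  assert (0 <= y^17) by (apply pow_le; lra).
  assert (y^18 <= 48^18) by (apply pow_incr; lra).
  assert (y^19 <= 48^19) by (apply pow_incr; lra).
  assert (0 <= y^20) by (apply pow_le; lra).
  assert (y^21 <= 48^21) by (apply pow_incr; lra).
  assert (0 <= y^22) by (apply pow_le; lra).
  assert (y^23 <= 48^23) by (apply pow_incr; lra).
  assert (y^24 <= 48^24) by (apply pow_incr; lra).
  assert (0 <= y^25) by (apply pow_le; lra).
  assert (y^26 <= 48^26) by (apply pow_incr; lra).
  assert (0 <= y^27) by (apply pow_le; lra).
  assert (y^28 <= 48^28) by (apply pow_incr; lra).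
  assert (0 <= y^29) by (apply pow_le; lra).
  lra.
Qed.

Lemma Q0i_0_a (a:R) : 0 <= 1280 * a <= 48 -> 0 < Q0i a.
Proof.
  intros H. pose proof (Q0i_0_y (1280 * a - 0)) as T.
  assert (E : 1280^29 * Q0i a = (391558093818064235268538385546912536101298141326670538357947446067200000000000000000000000000000000) + (-4150363826340635321136148883442200178926439773325585667875808477184000000000000000000000000000000) * (1280 * a - 0) + (14440140483575257141791826654828748904690056885386499249491515801600000000000000000000000000000) * (1280 * a - 0)^2 + (-14545427448707587477079532796061044049876879611808418809482575872000000000000000000000000000) * (1280 * a - 0)^3 + (-35783924107700777744647267116235162845099169102141666239793070080000000000000000000000000) * (1280 * a - 0)^4 + (121754515733925102502338360176191996199723240325635670684991488000000000000000000000000) * (1280 * a - 0)^5 + (-67609500580879021112452088251036897866080968232298593071923200000000000000000000000) * (1280 * a - 0)^6 + (-119254036386172941102439854969528382883104105850912647413760000000000000000000000) * (1280 * a - 0)^7 + (98140893640572892535356288764856821230251670299949924352000000000000000000000) * (1280 * a - 0)^8 + (93568011211850770048377034108882960445690190344329625600000000000000000000) * (1280 * a - 0)^9 + (-57710783594964232345969012075554719818034562853765120000000000000000000) * (1280 * a - 0)^10 + (-90660375248125272542321062824624373943784402059264000000000000000000) * (1280 * a - 0)^11 + (58450231950604104927550802873269912020819168460800000000000000000) * (1280 * a - 0)^12 + (17795603854066721006817797564294391140030873600000000000000000) * (1280 * a - 0)^13 + (-17619310283870544229913808808872527374843904000000000000000) * (1280 * a - 0)^14 + (8766859560574142713697334733057007445606400000000000000)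 * (1280 * a - 0)^15 + (-9063679062062366909691276550598347980800000000000000) * (1280 * a - 0)^16 + (5192640134510703812249877291133304832000000000000) * (1280 * a - 0)^17 + (-503876104141984616176055230241177600000000000) * (1280 * a - 0)^18 + (-1448656169394088805059983080161280000000000) * (1280 * a - 0)^19 + (1603730745949272652709229494272000000000) * (1280 * a - 0)^20 + (-1065956617471130961503164825600000000) * (1280 * a - 0)^21 + (441184438806000354166046720000000) * (1280 * a - 0)^22 + (-77713169018159345172480000000) * (1280 * a - 0)^23 + (-44207670722680376524800000) * (1280 * a - 0)^24 + (49346570482278727680000) * (1280 * a - 0)^25 + (-25628994906882048000) * (1280 * a - 0)^26 + (8493953443430400) * (1280 * a - 0)^27 + (-1823230632960) * (1280 * a - 0)^28 + (192119202) * (1280 * a - 0)^29) by (unfold Q0i; ring).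
  assert (0 < 1280^29) by (apply pow_lt; lra).
  assert (0 < 1280^29 * Q0i a) by (rewrite E; apply T; lra).
  nra.
Qed.

Lemma Q0i_1_y (y : R) : 0 <= y <= 48 -> 0 < (223842279467615771175603059654963063408541656843531262595678503601398513061886697053602596274569216) + (-2877359468320399285046419498088642675402396700085110037254981611758864830354369985258794896064512) * y + (11979586620210798055343681004214100339194226753134964705716012796208452845978572513947569618944) * y^2 + (-18780922949788314257038069274381812721081404611031589381612564154073126749364880940380192768) * y^3 + (-9321716496203279852998240246678718361369670978109470384704503133873525168836182502539264) * y^4 + (97179187533475662626919336441786589664664974092495761327046339881994550430902318530560) * y^5 + (-100552699647085091079670454025977428360784099529536059462401410732770682635991121920) * y^6 + (-74719592030361135936157239958483635184907660303531661769385332089644156673064960) * y^7 + (131083285238831891076963380891781189641571212948417321970712973714849393541120) * y^8 + (55859495411096227486330186187832368723680408691561802194107095446202613760) * y^9 + (-96216168132324399086799308275205067161969326095234544393628437090140160) * y^10 + (-54450021358350553799324266019855262436916881481753323854497715322880) * y^11 + (66222164774278490429747533932942508267843812710730095191979458560) * y^12 + (7579068957167417274791987841302163679506544394673766195527680) * y^13 + (-13434383182538004823027153865858355490652553976158208655360) * y^14 + (3363429716217221651707553194704449223163831634498682880) * y^15 + (-5123239929215013736801857371978628933939563237212160) * y^16 + (4357724441646080677128711467720965999969613905920) * y^17 + (-1263384672451270929692264875365300483381002240) * y^18 + (-353722500673872518523106381367921365483520) * y^19 + (746941155203088878138652485608359854080) * y^20 + (-652347520804077459513126800651714560) * y^21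 + (337961698575320212106539402526720) * y^22 + (-101154618638830972620861603840) * y^23 + (-1627493102907202543288320) * y^24 + (23594346039395178381312) * y^25 + (-16131068703046877184) * y^26 + (6223244385143808) * y^27 + (-1555800703776) * y^28 + (192119202) * y^29.
Proof.
  intros Hy.
  assert (y^1 <= 48^1) by (apply pow_incr; lra).
  assert (0 <= y^2) by (apply pow_le; lra).
  assert (y^3 <= 48^3) by (apply pow_incr; lra).
  assert (y^4 <= 48^4) by (apply pow_incr; lra).
  assert (0 <= y^5) by (apply pow_le; lra).
  assert (y^6 <= 48^6) by (apply pow_incr; lra).
  assert (y^7 <= 48^7) by (apply pow_incr; lra).
  assert (0 <= y^8) by (apply pow_le; lra).
  assert (0 <= y^9) by (apply pow_le; lra).
  assert (y^10 <= 48^10) by (apply pow_incr; lra).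
  assert (y^11 <= 48^11) by (apply pow_incr; lra).
  assert (0 <= y^12) by (apply pow_le; lra).
  assert (0 <= y^13) by (apply pow_le; lra).
  assert (y^14 <= 48^14) by (apply pow_incr; lra).
  assert (0 <= y^15) by (apply pow_le; lra).
  assert (y^16 <= 48^16) by (apply pow_incr; lra).
  assert (0 <= y^17) by (apply pow_le; lra).
  assert (y^18 <= 48^18) by (apply pow_incr; lra).
  assert (y^19 <= 48^19) by (apply pow_incr; lra).
  assert (0 <= y^20) by (apply pow_le; lra).
  assert (y^21 <= 48^21) by (apply pow_incr; lra).
  assert (0 <= y^22) by (apply pow_le; lra).
  assert (y^23 <= 48^23) by (apply pow_incr; lra).
  assert (y^24 <= 48^24) by (apply pow_incr; lra).
  assert (0 <= y^25) by (apply pow_le; lra).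
  assert (y^26 <= 48^26) by (apply pow_incr; lra).
  assert (0 <= y^27) by (apply pow_le; lra).
  assert (y^28 <= 48^28) by (apply pow_incr; lra).
  assert (0 <= y^29) by (apply pow_le; lra).
  lra.
Qed.

Lemma Q0i_1_a (a:R) : 48 <= 1280 * a <= 96 -> 0 < Q0i a.
Proof.
  intros H. pose proof (Q0i_1_y (1280 * a - 48)) as T.
  assert (E : 1280^29 * Q0i a = (223842279467615771175603059654963063408541656843531262595678503601398513061886697053602596274569216) + (-2877359468320399285046419498088642675402396700085110037254981611758864830354369985258794896064512) * (1280 * a - 48) + (11979586620210798055343681004214100339194226753134964705716012796208452845978572513947569618944) * (1280 * a - 48)^2 + (-18780922949788314257038069274381812721081404611031589381612564154073126749364880940380192768) * (1280 * a - 48)^3 + (-9321716496203279852998240246678718361369670978109470384704503133873525168836182502539264) * (1280 * a - 48)^4 + (97179187533475662626919336441786589664664974092495761327046339881994550430902318530560) * (1280 * a - 48)^5 + (-100552699647085091079670454025977428360784099529536059462401410732770682635991121920) * (1280 * a - 48)^6 + (-74719592030361135936157239958483635184907660303531661769385332089644156673064960) * (1280 * a - 48)^7 + (131083285238831891076963380891781189641571212948417321970712973714849393541120) * (1280 * a - 48)^8 + (55859495411096227486330186187832368723680408691561802194107095446202613760) * (1280 * a - 48)^9 + (-96216168132324399086799308275205067161969326095234544393628437090140160) * (1280 * a - 48)^10 + (-54450021358350553799324266019855262436916881481753323854497715322880) * (1280 * a - 48)^11 + (66222164774278490429747533932942508267843812710730095191979458560) * (1280 * a - 48)^12 + (7579068957167417274791987841302163679506544394673766195527680)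 * (1280 * a - 48)^13 + (-13434383182538004823027153865858355490652553976158208655360) * (1280 * a - 48)^14 + (3363429716217221651707553194704449223163831634498682880) * (1280 * a - 48)^15 + (-5123239929215013736801857371978628933939563237212160) * (1280 * a - 48)^16 + (4357724441646080677128711467720965999969613905920) * (1280 * a - 48)^17 + (-1263384672451270929692264875365300483381002240) * (1280 * a - 48)^18 + (-353722500673872518523106381367921365483520) * (1280 * a - 48)^19 + (746941155203088878138652485608359854080) * (1280 * a - 48)^20 + (-652347520804077459513126800651714560) * (1280 * a - 48)^21 + (337961698575320212106539402526720) * (1280 * a - 48)^22 + (-101154618638830972620861603840) * (1280 * a - 48)^23 + (-1627493102907202543288320) * (1280 * a - 48)^24 + (23594346039395178381312) * (1280 * a - 48)^25 + (-16131068703046877184) * (1280 * a - 48)^26 + (6223244385143808) * (1280 * a - 48)^27 + (-1555800703776) * (1280 * a - 48)^28 + (192119202) * (1280 * a - 48)^29) by (unfold Q0i; ring).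
  assert (0 < 1280^29) by (apply pow_lt; lra).
  assert (0 < 1280^29 * Q0i a) by (rewrite E; apply T; lra).
  nra.
Qed.

Lemma Q0i_2_y (y : R) : 0 <= y <= 48 -> 0 < (111226980902519409428693870882529802204606024124378968153011668471756682339827831036151135681380352) + (-1858836679468853830682869160019884331942044091391083858584453820223021894258451514297494685089792) * y + (9245382209574559864129935386579302411900356906374975530333488606501970047845357967670102720512) * y^2 + (-18566052206138678617741563129712898442748250677179905965392641777097722809789148794393198592) * y^3 + (10287214358757593281828396746065323695218391486065457267963146835246979481523789026557952) * y^4 + (65447503469901743817529437315982645471714438019525344927580741487061719834836084981760) * y^5 + (-116796031723090685031653515703088179233459554606847705834474507746028620434332712960) * y^6 + (-21109176955261575532600016268173338346854170089535073620405466700361875524157440) * y^7 + (144421321092514519138404851993256092870683107696732525775253932601605399511040) * y^8 + (4409116918890474894550718222536064654660059490713952721549258986891509760) * y^9 + (-114725318025325352663578574879071255002136898223205368252404649668116480) * y^10 + (-15465507761949403070788255585133710474886397887743592532772042833920) * y^11 + (68261121707137627711683355415768473921348103139272684869905285120) * y^12 + (-900235117678605371201052359347021296895038017158445447249920) * y^13 + (-12122732772888650826248642088925984841566418256647400980480) * y^14 + (675508822226465463130453690627150772830521712464363520) * y^15 + (-2034478998179602801937487887513118498431338199121920) * y^16 + (3202387106801378226223681371004842615820643205120) * y^17 + (-1342691277785771347024138976353879576197201920) * y^18 + (100540757949938754665195784050096755179520) * y^19 + (249619496002329866546849511280224501760) * y^20 + (-353453009119010532394058396949544960) * y^21 + (230094412453091532574839862722560)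 * y^22 + (-90817463446620653313023016960) * y^23 + (16456596637752238024949760) * y^24 + (7956091701371288420352) * y^25 + (-9343073504265633792) * y^26 + (4311961151680512) * y^27 + (-1288370774592) * y^28 + (192119202) * y^29.
Proof.
  intros Hy.
  assert (y^1 <= 48^1) by (apply pow_incr; lra).
  assert (0 <= y^2) by (apply pow_le; lra).
  assert (y^3 <= 48^3) by (apply pow_incr; lra).
  assert (0 <= y^4) by (apply pow_le; lra).
  assert (0 <= y^5) by (apply pow_le; lra).
  assert (y^6 <= 48^6) by (apply pow_incr; lra).
  assert (y^7 <= 48^7) by (apply pow_incr; lra).
  assert (0 <= y^8) by (apply pow_le; lra).
  assert (0 <= y^9) by (apply pow_le; lra).
  assert (y^10 <= 48^10) by (apply pow_incr; lra).
  assert (y^11 <= 48^11) by (apply pow_incr; lra).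
  assert (0 <= y^12) by (apply pow_le; lra).
  assert (y^13 <= 48^13) by (apply pow_incr; lra).
  assert (y^14 <= 48^14) by (apply pow_incr; lra).
  assert (0 <= y^15) by (apply pow_le; lra).
  assert (y^16 <= 48^16) by (apply pow_incr; lra).
  assert (0 <= y^17) by (apply pow_le; lra).
  assert (y^18 <= 48^18) by (apply pow_incr; lra).
  assert (0 <= y^19) by (apply pow_le; lra).
  assert (0 <= y^20) by (apply pow_le; lra).
  assert (y^21 <= 48^21) by (apply pow_incr; lra).
  assert (0 <= y^22) by (apply pow_le; lra).
  assert (y^23 <= 48^23) by (apply pow_incr; lra).
  assert (0 <= y^24) by (apply pow_le; lra).
  assert (0 <= y^25) by (apply pow_le; lra).
  assert (y^26 <= 48^26) by (apply pow_incr; lra).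
  assert (0 <= y^27) by (apply pow_le; lra).
  assert (y^28 <= 48^28) by (apply pow_incr; lra).
  assert (0 <= y^29) by (apply pow_le; lra).
  lra.
Qed.

Lemma Q0i_2_a (a:R) : 96 <= 1280 * a <= 144 -> 0 < Q0i a.
Proof.
  intros H. pose proof (Q0i_2_y (1280 * a - 96)) as T.
  assert (E : 1280^29 * Q0i a = (111226980902519409428693870882529802204606024124378968153011668471756682339827831036151135681380352) + (-1858836679468853830682869160019884331942044091391083858584453820223021894258451514297494685089792) * (1280 * a - 96) + (9245382209574559864129935386579302411900356906374975530333488606501970047845357967670102720512) * (1280 * a - 96)^2 + (-18566052206138678617741563129712898442748250677179905965392641777097722809789148794393198592) * (1280 * a - 96)^3 + (10287214358757593281828396746065323695218391486065457267963146835246979481523789026557952) * (1280 * a - 96)^4 + (65447503469901743817529437315982645471714438019525344927580741487061719834836084981760) * (1280 * a - 96)^5 + (-116796031723090685031653515703088179233459554606847705834474507746028620434332712960) * (1280 * a - 96)^6 + (-21109176955261575532600016268173338346854170089535073620405466700361875524157440) * (1280 * a - 96)^7 + (144421321092514519138404851993256092870683107696732525775253932601605399511040) * (1280 * a - 96)^8 + (4409116918890474894550718222536064654660059490713952721549258986891509760) * (1280 * a - 96)^9 + (-114725318025325352663578574879071255002136898223205368252404649668116480) * (1280 * a - 96)^10 + (-15465507761949403070788255585133710474886397887743592532772042833920) * (1280 * a - 96)^11 + (68261121707137627711683355415768473921348103139272684869905285120) * (1280 * a - 96)^12 + (-900235117678605371201052359347021296895038017158445447249920) * (1280 * a - 96)^13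 + (-12122732772888650826248642088925984841566418256647400980480) * (1280 * a - 96)^14 + (675508822226465463130453690627150772830521712464363520) * (1280 * a - 96)^15 + (-2034478998179602801937487887513118498431338199121920) * (1280 * a - 96)^16 + (3202387106801378226223681371004842615820643205120) * (1280 * a - 96)^17 + (-1342691277785771347024138976353879576197201920) * (1280 * a - 96)^18 + (100540757949938754665195784050096755179520) * (1280 * a - 96)^19 + (249619496002329866546849511280224501760) * (1280 * a - 96)^20 + (-353453009119010532394058396949544960) * (1280 * a - 96)^21 + (230094412453091532574839862722560) * (1280 * a - 96)^22 + (-90817463446620653313023016960) * (1280 * a - 96)^23 + (16456596637752238024949760) * (1280 * a - 96)^24 + (7956091701371288420352) * (1280 * a - 96)^25 + (-9343073504265633792) * (1280 * a - 96)^26 + (4311961151680512) * (1280 * a - 96)^27 + (-1288370774592) * (1280 * a - 96)^28 + (192119202) * (1280 * a - 96)^29) by (unfold Q0i; ring).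
  assert (0 < 1280^29) by (apply pow_lt; lra).
  assert (0 < 1280^29 * Q0i a) by (rewrite E; apply T; lra).
  nra.
Qed.

Lemma Q0i_3_y (y : R) : 0 <= y <= 24 -> 0 < (41320772341375016528680059031049686028823471949236278617720195543781689047330423985080492934299648) + (-1093500382842620172425488150803669102558203247518864218313978927950703257845372950797052429729792) * y + (6777097269498766865634312958097497563981411523257541256893984365232961860577788970936448319488) * y^2 + (-15343195527348948119609760751308440169955196566972424444914729205967917105190196427821678592) * y^3 + (21929946860463562704878860918606556154639260057731629659494694081440013306251266435842048) * y^4 + (31678849896528777680415889022778427545779931685966073783745105295459806867766388981760) * y^5 + (-114659790553261004506122170811016011161592062829167061779594982691533550328521687040) * y^6 + (33178435922393357405286651722843932701001486294465761611981130969727988463042560) * y^7 + (134327757864821281529425977818992535712815394209432848416207228799242165288960) * y^8 + (-50967586486655352319602370221349129565168944105301717348992688620558090240) * y^9 + (-112603585047451658972412602705487507760539194052071457842156535304683520) * y^10 + (23206199060679495092898849350755173141049181662406904412928821166080) * y^11 + (65176757937192098075453626968040466858420851841693419746235514880) * y^12 + (-8971720233962454437131131346093648768107140325379235821649920) * y^13 + (-11979447741952833824129575941298064113604666604111024619520) * y^14 + (-1848829968842133833092290872100890458386040598036480) * y^15 + (120913048678860215159291069121357265440822179921920) * y^16 + (2103589888573857542828571825101216326930787205120) * y^17 + (-1185528044218384290128587408030918835783598080) * y^18 + (204271679435159260355707729465254105579520) * y^19 + (-974927087744991361407604867475701760) * y^20 + (-159335881229525728877294715362344960) * y^21 + (141661936665535336512570722877440)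 * y^22 + (-68676146854459007917055016960) * y^23 + (20268433929440315037450240) * y^24 + (-659517323862344859648) * y^25 + (-4799193441567326208) * y^26 + (2760103743040512) * y^27 + (-1020940845408) * y^28 + (192119202) * y^29.
Proof.
  intros Hy.
  assert (y^1 <= 24^1) by (apply pow_incr; lra).
  assert (0 <= y^2) by (apply pow_le; lra).
  assert (y^3 <= 24^3) by (apply pow_incr; lra).
  assert (0 <= y^4) by (apply pow_le; lra).
  assert (0 <= y^5) by (apply pow_le; lra).
  assert (y^6 <= 24^6) by (apply pow_incr; lra).
  assert (0 <= y^7) by (apply pow_le; lra).
  assert (0 <= y^8) by (apply pow_le; lra).
  assert (y^9 <= 24^9) by (apply pow_incr; lra).
  assert (y^10 <= 24^10) by (apply pow_incr; lra).
  assert (0 <= y^11) by (apply pow_le; lra).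
  assert (0 <= y^12) by (apply pow_le; lra).
  assert (y^13 <= 24^13) by (apply pow_incr; lra).
  assert (y^14 <= 24^14) by (apply pow_incr; lra).
  assert (y^15 <= 24^15) by (apply pow_incr; lra).
  assert (0 <= y^16) by (apply pow_le; lra).
  assert (0 <= y^17) by (apply pow_le; lra).
  assert (y^18 <= 24^18) by (apply pow_incr; lra).
  assert (0 <= y^19) by (apply pow_le; lra).
  assert (y^20 <= 24^20) by (apply pow_incr; lra).
  assert (y^21 <= 24^21) by (apply pow_incr; lra).
  assert (0 <= y^22) by (apply pow_le; lra).
  assert (y^23 <= 24^23) by (apply pow_incr; lra).
  assert (0 <= y^24) by (apply pow_le; lra).
  assert (y^25 <= 24^25) by (apply pow_incr; lra).
  assert (y^26 <= 24^26) by (apply pow_incr; lra).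
  assert (0 <= y^27) by (apply pow_le; lra).
  assert (y^28 <= 24^28) by (apply pow_incr; lra).
  assert (0 <= y^29) by (apply pow_le; lra).
  lra.
Qed.

Lemma Q0i_3_a (a:R) : 144 <= 1280 * a <= 168 -> 0 < Q0i a.
Proof.
  intros H. pose proof (Q0i_3_y (1280 * a - 144)) as T.
  assert (E : 1280^29 * Q0i a = (41320772341375016528680059031049686028823471949236278617720195543781689047330423985080492934299648) + (-1093500382842620172425488150803669102558203247518864218313978927950703257845372950797052429729792) * (1280 * a - 144) + (6777097269498766865634312958097497563981411523257541256893984365232961860577788970936448319488) * (1280 * a - 144)^2 + (-15343195527348948119609760751308440169955196566972424444914729205967917105190196427821678592) * (1280 * a - 144)^3 + (21929946860463562704878860918606556154639260057731629659494694081440013306251266435842048) * (1280 * a - 144)^4 + (31678849896528777680415889022778427545779931685966073783745105295459806867766388981760) * (1280 * a - 144)^5 + (-114659790553261004506122170811016011161592062829167061779594982691533550328521687040) * (1280 * a - 144)^6 + (33178435922393357405286651722843932701001486294465761611981130969727988463042560) * (1280 * a - 144)^7 + (134327757864821281529425977818992535712815394209432848416207228799242165288960) * (1280 * a - 144)^8 + (-50967586486655352319602370221349129565168944105301717348992688620558090240) * (1280 * a - 144)^9 + (-112603585047451658972412602705487507760539194052071457842156535304683520) * (1280 * a - 144)^10 + (23206199060679495092898849350755173141049181662406904412928821166080) * (1280 * a - 144)^11 + (65176757937192098075453626968040466858420851841693419746235514880) * (1280 * a - 144)^12 + (-8971720233962454437131131346093648768107140325379235821649920) * (1280 * a - 144)^13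 + (-11979447741952833824129575941298064113604666604111024619520) * (1280 * a - 144)^14 + (-1848829968842133833092290872100890458386040598036480) * (1280 * a - 144)^15 + (120913048678860215159291069121357265440822179921920) * (1280 * a - 144)^16 + (2103589888573857542828571825101216326930787205120) * (1280 * a - 144)^17 + (-1185528044218384290128587408030918835783598080) * (1280 * a - 144)^18 + (204271679435159260355707729465254105579520) * (1280 * a - 144)^19 + (-974927087744991361407604867475701760) * (1280 * a - 144)^20 + (-159335881229525728877294715362344960) * (1280 * a - 144)^21 + (141661936665535336512570722877440) * (1280 * a - 144)^22 + (-68676146854459007917055016960) * (1280 * a - 144)^23 + (20268433929440315037450240) * (1280 * a - 144)^24 + (-659517323862344859648) * (1280 * a - 144)^25 + (-4799193441567326208) * (1280 * a - 144)^26 + (2760103743040512) * (1280 * a - 144)^27 + (-1020940845408) * (1280 * a - 144)^28 + (192119202) * (1280 * a - 144)^29) by (unfold Q0i; ring).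
  assert (0 < 1280^29) by (apply pow_lt; lra).
  assert (0 < 1280^29 * Q0i a) by (rewrite E; apply T; lra).
  nra.
Qed.

Lemma Q0i_4_y (y : R) : 0 <= y <= 12 -> 0 < (18775773177222573720855112931985874516162236755585825668041907784521156478605241970405752885477376) + (-793452994723867932140510582443545794474224623356353797018375798265499180466866515092811443863552) * y + (5751992009327279662550015206247515107523367111982881307782929270971256014002638506640344612864) * y^2 + (-13086707300926130747073940591815779723312305198060583879107566787023036853631559967585599488) * y^3 + (24759865367327577740916662069749352513177598284097723581271161872480874943665264956276736) * y^4 + (15670801144034721426679846646848865314755328042284766147928167188235270343289376604160) * y^5 + (-106986308237762064011931941472968839064204244129084413162285907132726162531622584320) * y^6 + (57728654379563202937439767601245002317660180961651503626243735411580349961994240) * y^7 + (120463611776874336048141484328518209914707110966336995940119252568803031121920) * y^8 + (-77061372967858650928013449024395552215604897133315539857516336282588938240) * y^9 + (-104038838177940704850060908071788619474623820375979280290628801145077760) * y^10 + (41513752257560977461471185438366900688250946679192692023021294059520) * y^11 + (61749827364412335277222258728705521167400838718838127600190095360) * y^12 + (-12994409226031194245183723573147277792523394135711194147717120) * y^13 + (-11953166155724391349747708424646278517151667526554731151360) * y^14 + (196256407132186086225812161658799184704622074454343680) * y^15 + (877410379797647501575711936479862961163593203056640) * y^16 + (1611258374590054966767138850567285220453143019520) * y^17 + (-1095090467562543652716295514935572792438947840) * y^18 + (187351343079341587923287700777522933268480) * y^19 + (-64041614768175341293222034769308549120) * y^20 + (-93984440976941029144138885114101760) * y^21 + (106931826552483511589904129720320)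 * y^22 + (-57272698379218217686731325440) * y^23 + (19079166170779258470727680) * y^24 + (-3140909176418152685568) * y^25 + (-3223229127195838464) * y^26 + (2118959723029248) * y^27 + (-887225880816) * y^28 + (192119202) * y^29.
Proof.
  intros Hy.
  assert (y^1 <= 12^1) by (apply pow_incr; lra).
  assert (0 <= y^2) by (apply pow_le; lra).
  assert (y^3 <= 12^3) by (apply pow_incr; lra).
  assert (0 <= y^4) by (apply pow_le; lra).
  assert (0 <= y^5) by (apply pow_le; lra).
  assert (y^6 <= 12^6) by (apply pow_incr; lra).
  assert (0 <= y^7) by (apply pow_le; lra).
  assert (0 <= y^8) by (apply pow_le; lra).
  assert (y^9 <= 12^9) by (apply pow_incr; lra).
  assert (y^10 <= 12^10) by (apply pow_incr; lra).
  assert (0 <= y^11) by (apply pow_le; lra).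
  assert (0 <= y^12) by (apply pow_le; lra).
  assert (y^13 <= 12^13) by (apply pow_incr; lra).
  assert (y^14 <= 12^14) by (apply pow_incr; lra).
  assert (0 <= y^15) by (apply pow_le; lra).
  assert (0 <= y^16) by (apply pow_le; lra).
  assert (0 <= y^17) by (apply pow_le; lra).
  assert (y^18 <= 12^18) by (apply pow_incr; lra).
  assert (0 <= y^19) by (apply pow_le; lra).
  assert (y^20 <= 12^20) by (apply pow_incr; lra).
  assert (y^21 <= 12^21) by (apply pow_incr; lra).
  assert (0 <= y^22) by (apply pow_le; lra).
  assert (y^23 <= 12^23) by (apply pow_incr; lra).
  assert (0 <= y^24) by (apply pow_le; lra).
  assert (y^25 <= 12^25) by (apply pow_incr; lra).
  assert (y^26 <= 12^26) by (apply pow_incr; lra).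
  assert (0 <= y^27) by (apply pow_le; lra).
  assert (y^28 <= 12^28) by (apply pow_incr; lra).
  assert (0 <= y^29) by (apply pow_le; lra).
  lra.
Qed.

Lemma Q0i_4_a (a:R) : 168 <= 1280 * a <= 180 -> 0 < Q0i a.
Proof.
  intros H. pose proof (Q0i_4_y (1280 * a - 168)) as T.
  assert (E : 1280^29 * Q0i a = (18775773177222573720855112931985874516162236755585825668041907784521156478605241970405752885477376) + (-793452994723867932140510582443545794474224623356353797018375798265499180466866515092811443863552) * (1280 * a - 168) + (5751992009327279662550015206247515107523367111982881307782929270971256014002638506640344612864) * (1280 * a - 168)^2 + (-13086707300926130747073940591815779723312305198060583879107566787023036853631559967585599488) * (1280 * a - 168)^3 + (24759865367327577740916662069749352513177598284097723581271161872480874943665264956276736) * (1280 * a - 168)^4 + (15670801144034721426679846646848865314755328042284766147928167188235270343289376604160) * (1280 * a - 168)^5 + (-106986308237762064011931941472968839064204244129084413162285907132726162531622584320) * (1280 * a - 168)^6 + (57728654379563202937439767601245002317660180961651503626243735411580349961994240) * (1280 * a - 168)^7 + (120463611776874336048141484328518209914707110966336995940119252568803031121920) * (1280 * a - 168)^8 + (-77061372967858650928013449024395552215604897133315539857516336282588938240) * (1280 * a - 168)^9 + (-104038838177940704850060908071788619474623820375979280290628801145077760) * (1280 * a - 168)^10 + (41513752257560977461471185438366900688250946679192692023021294059520) * (1280 * a - 168)^11 + (61749827364412335277222258728705521167400838718838127600190095360) * (1280 * a - 168)^12 + (-12994409226031194245183723573147277792523394135711194147717120) * (1280 * a - 168)^13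 + (-11953166155724391349747708424646278517151667526554731151360) * (1280 * a - 168)^14 + (196256407132186086225812161658799184704622074454343680) * (1280 * a - 168)^15 + (877410379797647501575711936479862961163593203056640) * (1280 * a - 168)^16 + (1611258374590054966767138850567285220453143019520) * (1280 * a - 168)^17 + (-1095090467562543652716295514935572792438947840) * (1280 * a - 168)^18 + (187351343079341587923287700777522933268480) * (1280 * a - 168)^19 + (-64041614768175341293222034769308549120) * (1280 * a - 168)^20 + (-93984440976941029144138885114101760) * (1280 * a - 168)^21 + (106931826552483511589904129720320) * (1280 * a - 168)^22 + (-57272698379218217686731325440) * (1280 * a - 168)^23 + (19079166170779258470727680) * (1280 * a - 168)^24 + (-3140909176418152685568) * (1280 * a - 168)^25 + (-3223229127195838464) * (1280 * a - 168)^26 + (2118959723029248) * (1280 * a - 168)^27 + (-887225880816) * (1280 * a - 168)^28 + (192119202) * (1280 * a - 168)^29) by (unfold Q0i; ring).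
  assert (0 < 1280^29) by (apply pow_lt; lra).
  assert (0 < 1280^29 * Q0i a) by (rewrite E; apply T; lra).
  nra.
Qed.

Lemma Q0i_5_y (y : R) : 0 <= y <= 12 -> 0 < (10060527262288844190469789745969402963512785074065066763545749749760000000000000000000000000000000) + (-660886037604768289370346475102167734169800666514208608633032278016000000000000000000000000000000) * y + (5302500896223493400448740450896448429860801527358389910504011202560000000000000000000000000000) * y^2 + (-11879321700473281670936903029578142356948727595564147606685954867200000000000000000000000000) * y^3 + (25472686813708186106611844656044840374624943271990908649692200960000000000000000000000000) * y^4 + (8153807618710598179126090158000081790511845840486668485787648000000000000000000000000) * y^5 + (-101663025700973311846376332060086415628028959409243703318937600000000000000000000000) * y^6 + (68872397634109974937917486931874023982375077112721283481600000000000000000000000) * y^7 + (111479277777433812643552599734348042721074480571507277824000000000000000000000) * y^8 + (-89193968426490527540693616315926515631598620412529868800000000000000000000) * y^9 + (-97978822401646463143492533784200035033966491331461120000000000000000000) * y^10 + (50252262314646238755269571366661375176060634660864000000000000000000) * y^11 + (59566255074133988015483165434945600429744953753600000000000000000) * y^12 + (-14998647492265214149360722871602232676692787200000000000000000) * y^13 + (-11900854009596029719702707448426167770021888000000000000000) * y^14 + (394744750225215987669563011417792184320000000000000000) * y^15 + (1182286875555048538487181029848428544000000000000000) * y^16 + (1379195035943749735606790564404125696000000000000) * y^17 + (-1054326790821664960207959330575974400000000000) * y^18 + (169413508258109034262794851983360000000000) * y^19 + (-84339824323800408551329934336000000000) * y^20 + (-67775143680851433419685836800000000) * y^21 + (91869403318107355313715200000000)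 * y^22 + (-51927317422028013943296000000) * y^23 + (17996385352718701843200000) * y^24 + (-4044383866845115200000) * y^25 + (-2583766593920160000) * y^26 + (1832083884100800) * y^27 + (-820368398520) * y^28 + (192119202) * y^29.
Proof.
  intros Hy.
  assert (y^1 <= 12^1) by (apply pow_incr; lra).
  assert (0 <= y^2) by (apply pow_le; lra).
  assert (y^3 <= 12^3) by (apply pow_incr; lra).
  assert (0 <= y^4) by (apply pow_le; lra).
  assert (0 <= y^5) by (apply pow_le; lra).
  assert (y^6 <= 12^6) by (apply pow_incr; lra).
  assert (0 <= y^7) by (apply pow_le; lra).
  assert (0 <= y^8) by (apply pow_le; lra).
  assert (y^9 <= 12^9) by (apply pow_incr; lra).
  assert (y^10 <= 12^10) by (apply pow_incr; lra).
  assert (0 <= y^11) by (apply pow_le; lra).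
  assert (0 <= y^12) by (apply pow_le; lra).
  assert (y^13 <= 12^13) by (apply pow_incr; lra).
  assert (y^14 <= 12^14) by (apply pow_incr; lra).
  assert (0 <= y^15) by (apply pow_le; lra).
  assert (0 <= y^16) by (apply pow_le; lra).
  assert (0 <= y^17) by (apply pow_le; lra).
  assert (y^18 <= 12^18) by (apply pow_incr; lra).
  assert (0 <= y^19) by (apply pow_le; lra).
  assert (y^20 <= 12^20) by (apply pow_incr; lra).
  assert (y^21 <= 12^21) by (apply pow_incr; lra).
  assert (0 <= y^22) by (apply pow_le; lra).
  assert (y^23 <= 12^23) by (apply pow_incr; lra).
  assert (0 <= y^24) by (apply pow_le; lra).
  assert (y^25 <= 12^25) by (apply pow_incr; lra).
  assert (y^26 <= 12^26) by (apply pow_incr; lra).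
  assert (0 <= y^27) by (apply pow_le; lra).
  assert (y^28 <= 12^28) by (apply pow_incr; lra).
  assert (0 <= y^29) by (apply pow_le; lra).
  lra.
Qed.

Lemma Q0i_5_a (a:R) : 180 <= 1280 * a <= 192 -> 0 < Q0i a.
Proof.
  intros H. pose proof (Q0i_5_y (1280 * a - 180)) as T.
  assert (E : 1280^29 * Q0i a = (10060527262288844190469789745969402963512785074065066763545749749760000000000000000000000000000000) + (-660886037604768289370346475102167734169800666514208608633032278016000000000000000000000000000000) * (1280 * a - 180) + (5302500896223493400448740450896448429860801527358389910504011202560000000000000000000000000000) * (1280 * a - 180)^2 + (-11879321700473281670936903029578142356948727595564147606685954867200000000000000000000000000) * (1280 * a - 180)^3 + (25472686813708186106611844656044840374624943271990908649692200960000000000000000000000000) * (1280 * a - 180)^4 + (8153807618710598179126090158000081790511845840486668485787648000000000000000000000000) * (1280 * a - 180)^5 + (-101663025700973311846376332060086415628028959409243703318937600000000000000000000000) * (1280 * a - 180)^6 + (68872397634109974937917486931874023982375077112721283481600000000000000000000000) * (1280 * a - 180)^7 + (111479277777433812643552599734348042721074480571507277824000000000000000000000) * (1280 * a - 180)^8 + (-89193968426490527540693616315926515631598620412529868800000000000000000000) * (1280 * a - 180)^9 + (-97978822401646463143492533784200035033966491331461120000000000000000000) * (1280 * a - 180)^10 + (50252262314646238755269571366661375176060634660864000000000000000000) * (1280 * a - 180)^11 + (59566255074133988015483165434945600429744953753600000000000000000) * (1280 * a - 180)^12 + (-14998647492265214149360722871602232676692787200000000000000000) * (1280 * a - 180)^13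 + (-11900854009596029719702707448426167770021888000000000000000) * (1280 * a - 180)^14 + (394744750225215987669563011417792184320000000000000000) * (1280 * a - 180)^15 + (1182286875555048538487181029848428544000000000000000) * (1280 * a - 180)^16 + (1379195035943749735606790564404125696000000000000) * (1280 * a - 180)^17 + (-1054326790821664960207959330575974400000000000) * (1280 * a - 180)^18 + (169413508258109034262794851983360000000000) * (1280 * a - 180)^19 + (-84339824323800408551329934336000000000) * (1280 * a - 180)^20 + (-67775143680851433419685836800000000) * (1280 * a - 180)^21 + (91869403318107355313715200000000) * (1280 * a - 180)^22 + (-51927317422028013943296000000) * (1280 * a - 180)^23 + (17996385352718701843200000) * (1280 * a - 180)^24 + (-4044383866845115200000) * (1280 * a - 180)^25 + (-2583766593920160000) * (1280 * a - 180)^26 + (1832083884100800) * (1280 * a - 180)^27 + (-820368398520) * (1280 * a - 180)^28 + (192119202) * (1280 * a - 180)^29) by (unfold Q0i; ring).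
  assert (0 < 1280^29) by (apply pow_lt; lra).
  assert (0 < 1280^29 * Q0i a) by (rewrite E; apply T; lra).
  nra.
Qed.

Definition P2i (a:R) := (-16240) * a + (45924) * a^2 + (290080) * a^3 + (889260) * a^4 + (1694508) * a^5 + (402068) * a^6 + (-6325044) * a^7 + (-7427600) * a^8 + (9311300) * a^9 + (5435324) * a^10 + (-5780296) * a^11 + (2999468) * a^12 + (-233020) * a^13 + (-2086580) * a^14 + (1783612) * a^15 + (-277768) * a^16 + (-470404) * a^17 + (235200) * a^18 + (-39200) * a^19.

Lemma P2i_0_y (y : R) : 0 <= y <= 69312 -> 0 < (30619705386705060020923282177220751177704522683672166400000000000000000000000000000000000000000000000000000000000) + (10713138489572821039333603237591411936361883118233190400000000000000000000000000000000000000000000000000000000) * y + (174896151476544127975804610784249167997735073637990400000000000000000000000000000000000000000000000000000) * y^2 + (870072366953017417374532089607450389465462420275200000000000000000000000000000000000000000000000000) * y^3 + (1714145433574002216042542855565292646504910028800000000000000000000000000000000000000000000000) * y^4 + (-3219885725690539898102504447371450709232844800000000000000000000000000000000000000000000) * y^5 + (-23798323258291537790511608543194748079308800000000000000000000000000000000000000000) * y^6 + (-29722561747074094625347443224650501324800000000000000000000000000000000000000) * y^7 + (59788336277482073424451513118988697600000000000000000000000000000000000) * y^8 + (141007545226377157939979163690598400000000000000000000000000000000) * y^9 + (-10124062365629082554921176268800000000000000000000000000000) * y^10 + (-63823139005026587428834508800000000000000000000000000) * y^11 + (25559389198623188398899200000000000000000000000) * y^12 + (-92901874525400360550400000000000000000000)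 * y^13 + (45820511886141030400000000000000000) * y^14 + (41666910512742400000000000000) * y^15 + (-208619674009600000000000) * y^16 + (5658214400000000) * y^17 + (79027200000) * y^18 + (-39200) * y^19.
Proof.
  intros Hy.
  assert (0 <= y^1) by (apply pow_le; lra).
  assert (0 <= y^2) by (apply pow_le; lra).
  assert (0 <= y^3) by (apply pow_le; lra).
  assert (0 <= y^4) by (apply pow_le; lra).
  assert (y^5 <= 69312^5) by (apply pow_incr; lra).
  assert (y^6 <= 69312^6) by (apply pow_incr; lra).
  assert (y^7 <= 69312^7) by (apply pow_incr; lra).
  assert (0 <= y^8) by (apply pow_le; lra).
  assert (0 <= y^9) by (apply pow_le; lra).
  assert (y^10 <= 69312^10) by (apply pow_incr; lra).
  assert (y^11 <= 69312^11) by (apply pow_incr; lra).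
  assert (0 <= y^12) by (apply pow_le; lra).
  assert (y^13 <= 69312^13) by (apply pow_incr; lra).
  assert (0 <= y^14) by (apply pow_le; lra).
  assert (0 <= y^15) by (apply pow_le; lra).
  assert (y^16 <= 69312^16) by (apply pow_incr; lra).
  assert (0 <= y^17) by (apply pow_le; lra).
  assert (0 <= y^18) by (apply pow_le; lra).
  assert (y^19 <= 69312^19) by (apply pow_incr; lra).
  lra.
Qed.

Lemma P2i_0_a (a:R) : 96000 <= 640000 * a <= 165312 -> 0 < P2i a.
Proof.
  intros H. pose proof (P2i_0_y (640000 * a - 96000)) as T.
  assert (E : 640000^19 * P2i a = (30619705386705060020923282177220751177704522683672166400000000000000000000000000000000000000000000000000000000000) + (10713138489572821039333603237591411936361883118233190400000000000000000000000000000000000000000000000000000000) * (640000 * a - 96000) + (174896151476544127975804610784249167997735073637990400000000000000000000000000000000000000000000000000000) * (640000 * a - 96000)^2 + (870072366953017417374532089607450389465462420275200000000000000000000000000000000000000000000000000) * (640000 * a - 96000)^3 + (1714145433574002216042542855565292646504910028800000000000000000000000000000000000000000000000) * (640000 * a - 96000)^4 + (-3219885725690539898102504447371450709232844800000000000000000000000000000000000000000000) * (640000 * a - 96000)^5 + (-23798323258291537790511608543194748079308800000000000000000000000000000000000000000) * (640000 * a - 96000)^6 + (-29722561747074094625347443224650501324800000000000000000000000000000000000000) * (640000 * a - 96000)^7 + (59788336277482073424451513118988697600000000000000000000000000000000000) * (640000 * a - 96000)^8 + (141007545226377157939979163690598400000000000000000000000000000000) * (640000 * a - 96000)^9 + (-10124062365629082554921176268800000000000000000000000000000)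 * (640000 * a - 96000)^10 + (-63823139005026587428834508800000000000000000000000000) * (640000 * a - 96000)^11 + (25559389198623188398899200000000000000000000000) * (640000 * a - 96000)^12 + (-92901874525400360550400000000000000000000) * (640000 * a - 96000)^13 + (45820511886141030400000000000000000) * (640000 * a - 96000)^14 + (41666910512742400000000000000) * (640000 * a - 96000)^15 + (-208619674009600000000000) * (640000 * a - 96000)^16 + (5658214400000000) * (640000 * a - 96000)^17 + (79027200000) * (640000 * a - 96000)^18 + (-39200) * (640000 * a - 96000)^19) by (unfold P2i; ring).
  assert (0 < 640000^19) by (apply pow_lt; lra).
  assert (0 < 640000^19 * P2i a) by (rewrite E; apply T; lra).
  nra.
Qed.

Lemma key_bracket a v w : 0 <= a -> a <= 2583/10000 -> a <= w -> w <= v -> v <= 99/70 * a ->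
  (2 - v - w) * v^2 * w^2 <= a^2 * (v + w - 2 * v * w).
Proof.
  intros.
  set (r := sqrt (v * w)).
  assert (hr0 : 0 <= r) by apply sqrt_pos.
  assert (hr2 : r * r = v * w) by (apply sqrt_sqrt; nra).
  assert (hra : a <= r).
  { apply Rsqr_incr_0_var; [unfold Rsqr; nra| lra]. }
  assert (hrb : r <= 99/70 * a).
  { apply Rsqr_incr_0_var; [unfold Rsqr; nra| nra]. }
  assert (hs : 2 * r <= v + w).
  { apply Rsqr_incr_0_var; [unfold Rsqr; nra| lra]. }
  assert (k1 : r * (a^2 + r^2) <= a^2 + r^4).
  { assert (r^3 <= a^2).
    { assert (r^3 <= (99/70*a)^3) by (apply pow_incr; lra). nra. }
    assert (0 <= (1 - r) * (a^2 - r^3)) by (apply Rmult_le_pos; nra). nra. }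
  replace ((2 - v - w) * v^2 * w^2) with ((2 - (v+w)) * (r*r)^2) by (rewrite hr2; ring).
  replace (v + w - 2 * v * w) with ((v+w) - 2 * (r*r)) by (rewrite hr2; ring).
  assert (0 <= a^2 + r^4) by nra.
  assert (2 * r * (a^2 + r^4) <= (v + w) * (a^2 + r^4)) by (apply Rmult_le_compat_r; lra).
  nra.
Qed.

Definition qq (a:R) := 1 + a^2.
Definition kn (a:R) := 4*a*(1-a^2).
Definition phi (a:R) := a - a^3/2.
Definition cdb (a:R) := 99/140*((1+a)*a^2/2 + 2*a*(1-a)).
Definition Mf (a:R) := cdb a * (1 - 99/70*a) + 99/70*a.
Definition LP0 (a:R) := (1+a)^2*(1-a)^2*(qq a)^4*(((qq a)^2 - kn a)^2 + kn a*(qq a)^2*(Mf a)^2)*(1-4*phi a).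
Definition RP0 (a:R) := (1+2*phi a)*(1-99/70*a)^2*((qq a)^2-kn a)^3*((qq a)^2+kn a).
Definition wn (a:R) := 4*(qq a)^2+3*kn a - 99/70*a*(4*(qq a)^2+kn a).
Definition LP2 (a:R) := (1+a)^2*(1-a)^2*(1-4*phi a)*(4*(qq a)^2+3*kn a)^2*(qq a)^2.
Definition RP2 (a:R) := (1+2*phi a)*(wn a)^2*((qq a)^2-kn a).
Lemma id0 a : 96040000 * (RP0 a - LP0 a) = a * Q0i a.
Proof. unfold RP0, LP0, Q0i, Mf, qq, kn, phi, cdb. field. Qed.
Lemma id2 a : 1225 * (RP2 a - LP2 a) = P2i a.
Proof. unfold RP2, LP2, P2i, wn, qq, kn, phi. field. Qed.

Lemma Q0i_pos a : 0 <= a <= 3/20 -> 0 < Q0i a.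
Proof.
  intros H.
  destruct (Rle_dec a (3/80)). apply Q0i_0_a; lra.
  destruct (Rle_dec a (3/40)). apply Q0i_1_a; lra.
  destruct (Rle_dec a (9/80)). apply Q0i_2_a; lra.
  destruct (Rle_dec a (21/160)). apply Q0i_3_a; lra.
  destruct (Rle_dec a (45/320)). apply Q0i_4_a; lra.
  apply Q0i_5_a; lra.
Qed.

Lemma U0poly a : 0 <= a <= 3/20 -> LP0 a <= RP0 a.
Proof.
  intros H. pose proof (Q0i_pos a H). pose proof (id0 a).
  assert (0 <= a * Q0i a) by (apply Rmult_le_pos; lra). lra.
Qed.

Lemma U2poly a : 3/20 <= a -> 15 * a^2 < 1 -> LP2 a <= RP2 a.
Proof.
  intros H H15. assert (a <= 2583/10000) by nra.
  assert (0 < P2i a) by (apply P2i_0_a; lra). pose proof (id2 a). lra.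
Qed.

Lemma le_div_r x y c : 0 < c -> x * c <= y -> x <= y / c.
Proof. intros hc h. apply (Rmult_le_reg_r c); auto. unfold Rdiv. rewrite Rmult_assoc, Rinv_l; lra. Qed.

Lemma le_div_l x y c : 0 < c -> x <= y * c -> x / c <= y.
Proof. intros hc h. apply (Rmult_le_reg_r c); auto. unfold Rdiv. rewrite Rmult_assoc, Rinv_l; lra. Qed.

Lemma mono a K Kb v w : 0 <= a <= 2583/10000 -> 0 <= K -> K <= Kb -> Kb < 1 -> 0 <= v ->
  (1+K) * v^2 <= 2 * a^2 -> a <= w -> w <= 99/70 * a -> 2 * a^2 <= w^2 * (1 + Kb) ->
  (1 - w)^2 * (1 - Kb) <= (1 - v)^2 * (1 - K).
Proof.
  intros ha hK hKK hKb hv hvK haw hw hwK.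
  assert (hw1 : w < 1) by lra.
  assert (hv1 : v <= 99/70 * a).
  { apply Rsqr_incr_0_var; [unfold Rsqr; nra| lra]. }
  destruct (Rle_dec v w).
  - assert ((1 - w)^2 <= (1-v)^2) by (apply pow_incr; lra).
    apply Rmult_le_compat; try nra.
  - assert (hvw : w < v) by lra.
    assert (hw0 : 0 < w) by nra.
    assert (B : 0 <= a^2 * (v + w - 2 * v * w) - (2 - v - w) * v^2 * w^2).
    { pose proof (key_bracket a v w (proj1 ha) (proj2 ha) haw (Rlt_le _ _ hvw) hv1). lra. }
    assert (Id : (1-v)^2*(v^2-a^2)*w^2 - (1-w)^2*(w^2-a^2)*v^2
       = (v - w) * (a^2 * (v + w - 2 * v * w) - (2 - v - w) * v^2 * w^2)) by ring.
    assert (Kf : (1-w)^2*(w^2-a^2)*v^2 <= (1-v)^2*(v^2-a^2)*w^2).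
    { assert (0 <= (v - w) * (a^2 * (v + w - 2 * v * w) - (2 - v - w) * v^2 * w^2))
        by (apply Rmult_le_pos; lra). lra. }
    assert (E1 : (1-K) * v^2 >= 2 * v^2 - 2 * a^2) by nra.
    assert (E2 : (1-Kb) * w^2 <= 2 * w^2 - 2 * a^2) by nra.
    assert (S1 : (1-v)^2 * (2*v^2 - 2*a^2) * w^2 <= (1-v)^2 * ((1-K) * v^2) * w^2).
    { apply Rmult_le_compat_r; [nra|]. apply Rmult_le_compat_l; [nra|lra]. }
    assert (S2 : (1-w)^2 * ((1-Kb) * w^2) * v^2 <= (1-w)^2 * (2*w^2 - 2*a^2) * v^2).
    { apply Rmult_le_compat_r; [nra|]. apply Rmult_le_compat_l; [nra|lra]. }
    assert (0 < v^2 * w^2) by (apply Rmult_lt_0_compat; nra).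
    apply (Rmult_le_reg_r (v^2 * w^2)); auto. nra.
Qed.

Lemma FS (a K l1 l2 d cd : R) :
 0 <= a -> 15 * a^2 < 1 -> 4*(a - a^3/2) < 1 ->
 0 <= K -> K <= 4*a*(1-a^2)/(1+a^2)^2 ->
 0 <= l1 -> 0 <= l2 -> 0 <= d ->
 0 <= cd -> cd <= 99/140 * ((1+a)*a^2/2 + 2*a*(1-a)) ->
 d * (1 - K) <= 4 * a^2 * (l1^2 + l2^2) ->
 l1^2 + l2^2 + 2*K*l1*l2 <= (2*(1+a)/(1-a) + a*(l1+l2))^2 ->
 Rabs (l1 - l2) * (1 - K) <= 2*(1+a)/(1-a) * cd + a*(l1+l2) ->
 d * (1 - 4*(a - a^3/2)) <= (1 + 2*(a - a^3/2)) * (16*a^2/(1-a)^4).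
Proof.
  intros ha h15 hphi hK hKb hl1 hl2 hd hcd0 hcd C1 C2 C3.
  assert (hamax : a <= 2583/10000) by nra.
  set (Kb := 4*a*(1-a^2)/(1+a^2)^2) in *.
  assert (hq : 0 < 1 + a^2) by nra.
  assert (hKbq : Kb * (1+a^2)^2 = 4*a*(1-a^2)) by (unfold Kb; field; lra).
  assert (hKb1 : Kb < 9/10).
  { apply (Rmult_lt_reg_r ((1+a^2)^2)); [nra|]. rewrite hKbq. nra. }
  assert (hKb0 : 0 <= Kb) by lra.
  set (tau := 2*(1+a)/(1-a)) in *.
  assert (htau : 0 < tau) by (unfold tau; apply Rdiv_lt_0_compat; lra).
  set (S := l1 + l2) in *. set (W := tau + a * S) in *.
  assert (hS : 0 <= S) by (unfold S; lra).
  assert (hW : tau <= W) by (unfold W; nra).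
  assert (A : (1 + K) * S^2 <= 2 * W^2).
  { assert (2*(l1^2 + l2^2 + 2*K*l1*l2) - (1+K)*S^2 = (1-K)*(l1-l2)^2) by (unfold S; ring).
    assert (0 <= (1-K)*(l1-l2)^2) by (apply Rmult_le_pos; [lra| apply pow2_ge_0]). fold W in C2. lra. }
  set (phi0 := a - a^3/2) in *.
  destruct (Rle_dec a (3/20)) as [Hsmall | Hlarge].
  -
    set (c0 := 99/70).
    assert (hc0a : 0 < 1 - c0 * a) by (unfold c0; lra).
    assert (hSW : S <= c0 * W).
    { apply Rsqr_incr_0_var; [unfold Rsqr, c0; nra| unfold c0; nra]. }
    assert (hS0 : S * (1 - c0 * a) <= c0 * tau) by (unfold W in hSW; nra).
    set (W0 := tau / (1 - c0 * a)).
    assert (hWW0 : W <= W0).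
    { unfold W0. apply le_div_r; auto.
      assert (a * (S * (1 - c0*a)) <= a * (c0 * tau)) by (apply Rmult_le_compat_l; lra).
      unfold W. nra. }
    set (M := cdb a * (1 - c0 * a) + c0 * a).
    set (V0 := tau * M / (1 - c0 * a)).
    assert (hV : tau * cd + a * S <= V0).
    { unfold V0. apply le_div_r; auto. unfold M.
      assert (tau * cd <= tau * cdb a) by (apply Rmult_le_compat_l; unfold cdb; lra).
      assert (a * (S * (1 - c0*a)) <= a * (c0 * tau)) by (apply Rmult_le_compat_l; lra).
      assert (tau * cd * (1 - c0 * a) <= tau * cdb a * (1 - c0*a)) by (apply Rmult_le_compat_r; lra).
      nra. }
    set (e := l1 - l2).
    assert (he : e^2 * (1-K)^2 <= V0^2).
    { assert (0 <= Rabs e * (1-K)) by (apply Rmult_le_pos; [apply Rabs_pos| lra]).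
      assert (Rabs e * (1-K) <= V0) by (fold tau in C3; unfold e; lra).
      assert ((Rabs e * (1-K))^2 <= V0^2) by (apply pow_incr; lra).
      replace (e^2 * (1-K)^2) with ((Rabs e * (1-K))^2). lra.
      rewrite Rpow_mult_distr. f_equal. rewrite RPow_abs. apply Rabs_right. apply Rle_ge, pow2_ge_0. }
    assert (hC2 : (1+K)*(l1^2+l2^2) <= W0^2 + K * e^2).
    { assert (l1^2 + l2^2 + 2*K*l1*l2 = (1+K)*(l1^2+l2^2) - K*e^2) by (unfold e; ring).
      assert (W^2 <= W0^2) by (apply pow_incr; lra). fold W in C2. lra. }
    set (X := fun k => (1 - k^2) * (1-k)^2).
    set (N := fun k => W0^2 * (1-k)^2 + k * V0^2).
    assert (D1 : d * X K <= 4 * a^2 * N K).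
    { unfold X, N.
      assert (d * (1-K) * (1+K) <= 4 * a^2 * (W0^2 + K*e^2)).
      { assert (d * (1-K) * (1+K) <= 4 * a^2 * (l1^2+l2^2) * (1+K)) by (apply Rmult_le_compat_r; lra).
        nra. }
      assert (d * (1-K) * (1+K) * (1-K)^2 <= 4 * a^2 * (W0^2 + K*e^2) * (1-K)^2)
        by (apply Rmult_le_compat_r; [nra|lra]).
      assert (K * e^2 * (1-K)^2 <= K * V0^2) by (rewrite Rmult_assoc; apply Rmult_le_compat_l; lra).
      nra. }
    assert (MON : N K * X Kb <= N Kb * X K).
    { unfold N, X.
      assert (a1 : 1 - Kb^2 <= 1 - K^2) by nra.
      assert (a2 : (1-Kb)^2 <= (1-K)^2) by (apply pow_incr; lra).
      assert (0 <= 1 - Kb^2) by nra. assert (0 <= (1-Kb)^2) by nra.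
      assert (t1 : W0^2 * (1-K)^2 * ((1-Kb^2)*(1-Kb)^2) <= W0^2*(1-Kb)^2 * ((1-K^2)*(1-K)^2)).
      { assert ((1-Kb^2) * (1-K)^2 * (1-Kb)^2 <= (1-K^2) * (1-K)^2 * (1-Kb)^2).
        { apply Rmult_le_compat_r; [nra|]. apply Rmult_le_compat_r; [nra|lra]. }
        assert (0 <= W0^2) by nra. nra. }
      assert (t2 : K * ((1-Kb^2)*(1-Kb)^2) <= Kb * ((1-K^2)*(1-K)^2)).
      { apply Rmult_le_compat; [lra| apply Rmult_le_pos; nra| lra|].
        apply Rmult_le_compat; nra. }
      assert (0 <= V0^2) by nra.
      nra. }
    assert (XK : 0 < X K) by (unfold X; apply Rmult_lt_0_compat; nra).
    assert (XKb : 0 < X Kb) by (unfold X; apply Rmult_lt_0_compat; nra).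
    assert (D2 : d * X Kb <= 4 * a^2 * N Kb).
    { apply (Rmult_le_reg_r (X K)); auto.
      assert (d * X K * X Kb <= 4 * a^2 * N K * X Kb) by (apply Rmult_le_compat_r; lra).
      assert (4 * a^2 * (N K * X Kb) <= 4 * a^2 * (N Kb * X K)) by (apply Rmult_le_compat_l; nra).
      nra. }
    pose proof (U0poly a (conj ha Hsmall)) as U.
    assert (EL : N Kb * (1 - 4*phi0) * (1-a)^4 * (1 - c0*a)^2 * (1+a^2)^8 = 4 * LP0 a).
    { unfold N, W0, V0, M, tau, LP0, phi0, c0, Mf, phi, qq, kn. fold c0.
      replace Kb with (4*a*(1-a^2)/(1+a^2)^2) by reflexivity. field. lra. }
    assert (ER : 4 * (1 + 2*phi0) * X Kb * (1 - c0*a)^2 * (1+a^2)^8 = 4 * RP0 a).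
    { unfold X, RP0, phi0, c0, phi, qq, kn. replace Kb with (4*a*(1-a^2)/(1+a^2)^2) by reflexivity. field. lra. }
    assert (P8 : 0 < (1 - c0*a)^2 * (1+a^2)^8) by (apply Rmult_lt_0_compat; apply pow_lt; lra).
    assert (UN : N Kb * (1 - 4*phi0) * (1-a)^4 <= 4 * (1 + 2*phi0) * X Kb).
    { apply (Rmult_le_reg_r ((1 - c0*a)^2 * (1+a^2)^8)); auto.
      replace (N Kb * (1 - 4 * phi0) * (1 - a) ^ 4 * ((1 - c0 * a) ^ 2 * (1 + a ^ 2) ^ 8)) with
        (N Kb * (1 - 4*phi0) * (1-a)^4 * (1 - c0*a)^2 * (1+a^2)^8) by ring.
      replace (4 * (1 + 2 * phi0) * X Kb * ((1 - c0 * a) ^ 2 * (1 + a ^ 2) ^ 8)) with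
        (4 * (1 + 2*phi0) * X Kb * (1 - c0*a)^2 * (1+a^2)^8) by ring.
      rewrite EL, ER. lra. }
    assert (h1a : 0 < (1-a)^4) by (apply pow_lt; lra).
    apply (Rmult_le_reg_r (X Kb * (1-a)^4)); [apply Rmult_lt_0_compat; auto|].
    replace ((1 + 2 * phi0) * (16 * a ^ 2 / (1 - a) ^ 4) * (X Kb * (1 - a) ^ 4))
      with (4 * a^2 * (4 * (1 + 2*phi0) * X Kb)) by (field; lra).
    assert (0 <= 1 - 4*phi0) by lra.
    assert (d * X Kb * (1 - 4*phi0) * (1-a)^4 <= 4 * a^2 * N Kb * (1 - 4*phi0) * (1-a)^4).
    { apply Rmult_le_compat_r; [lra|]. apply Rmult_le_compat_r; lra. }
    assert (4 * a^2 * (N Kb * (1 - 4*phi0) * (1-a)^4) <= 4 * a^2 * (4 * (1 + 2*phi0) * X Kb))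
      by (apply Rmult_le_compat_l; nra).
    nra.
  -
    assert (Ha : 3/20 <= a) by lra.
    assert (hl : l1^2 + l2^2 <= W^2).
    { assert (0 <= 2*K*l1*l2) by (repeat apply Rmult_le_pos; lra). lra. }
    assert (hW0 : 0 < W) by lra.
    set (v := a * S / W).
    assert (hv0 : 0 <= v) by (unfold v; apply Rmult_le_pos; [nra| left; apply Rinv_0_lt_compat; lra]).
    assert (Wn : W <> 0) by (apply Rgt_not_eq; lra).
    assert (h1v : (1 - v) * W = tau).
    { assert (v * W = a * S) by (unfold v; field; exact Wn). unfold W in *. nra. }
    assert (hvK : (1+K) * v^2 <= 2 * a^2).
    { unfold v. replace ((1 + K) * (a * S / W) ^ 2) with (a^2 * ((1+K) * S^2) / W^2) by (field; lra).
      assert (0 < W^2) by nra. apply le_div_l; auto.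
      assert (a^2 * ((1 + K) * S^2) <= a^2 * (2 * W^2)) by (apply Rmult_le_compat_l; nra). nra. }
    set (c0 := 99/70).
    set (w := c0 * a * (4 + Kb) / (4 + 3*Kb)).
    assert (hwa : a <= w).
    { unfold w. apply (Rmult_le_reg_r (4 + 3*Kb)); [lra|]. field_simplify; [|lra]. unfold c0. nra. }
    assert (hwb : w <= 99/70 * a).
    { unfold w. apply (Rmult_le_reg_r (4 + 3*Kb)); [lra|]. field_simplify; [|lra]. unfold c0. nra. }
    assert (hwK : 2 * a^2 <= w^2 * (1 + Kb)).
    { unfold w. replace ((c0 * a * (4 + Kb) / (4 + 3 * Kb)) ^ 2 * (1 + Kb))
        with (a^2 * (c0^2 * (4 + Kb)^2 * (1 + Kb)) / (4 + 3*Kb)^2) by (field; lra).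
      apply (Rmult_le_reg_r ((4 + 3*Kb)^2)); [nra|]. field_simplify; [|lra].
      assert (2 * (4 + 3*Kb)^2 <= c0^2 * (4 + Kb)^2 * (1 + Kb)) by (unfold c0; nra). nra. }
    pose proof (mono a K Kb v w (conj ha hamax) hK hKb (ltac:(lra)) hv0 hvK hwa hwb hwK) as MO.
    assert (E1 : d * ((1 - w)^2 * (1 - Kb)) <= 4 * a^2 * tau^2).
    { assert (d * (1-K) * (1-v)^2 <= 4 * a^2 * W^2 * (1-v)^2) by (apply Rmult_le_compat_r; nra).
      assert (4 * a^2 * W^2 * (1-v)^2 = 4 * a^2 * tau^2) by (rewrite <- h1v; ring).
      assert (d * ((1 - w)^2 * (1 - Kb)) <= d * ((1-v)^2 * (1-K))) by (apply Rmult_le_compat_l; lra).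
      nra. }
    pose proof (U2poly a Ha h15) as U.
    assert (hw1 : w < 1) by lra.
    assert (Q2 : 0 < (1+a^2)^2 * (4*(1+a^2)^2 + 3 * kn a)^2).
    { apply Rmult_lt_0_compat; apply pow_lt; [lra|]. unfold kn. nra. }
    assert (EL : tau^2 * (1 - 4*phi0) * (1-a)^4 * ((1+a^2)^2 * (4*(1+a^2)^2 + 3 * kn a)^2) = 4 * LP2 a).
    { unfold tau, LP2, phi0, phi, qq. field. lra. }
    assert (ER : 4 * (1 + 2*phi0) * ((1-w)^2 * (1-Kb)) * ((1+a^2)^2 * (4*(1+a^2)^2 + 3 * kn a)^2) = 4 * RP2 a).
    { unfold w, RP2, wn, phi0, phi, qq, kn, c0. replace Kb with (4*a*(1-a^2)/(1+a^2)^2) by reflexivity.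
      field. split; [lra|]. unfold kn in Q2. intro HH. nra. }
    assert (UN : tau^2 * (1 - 4*phi0) * (1-a)^4 <= 4 * (1 + 2*phi0) * ((1-w)^2 * (1-Kb))).
    { apply (Rmult_le_reg_r ((1+a^2)^2 * (4*(1+a^2)^2 + 3 * kn a)^2)); auto. rewrite EL, ER. lra. }
    assert (P1 : 0 < (1-w)^2 * (1-Kb)) by (apply Rmult_lt_0_compat; [apply pow_lt|]; lra).
    assert (h1a : 0 < (1-a)^4) by (apply pow_lt; lra).
    apply (Rmult_le_reg_r ((1-w)^2 * (1-Kb) * (1-a)^4)); [apply Rmult_lt_0_compat; auto|].
    replace ((1 + 2 * phi0) * (16 * a ^ 2 / (1 - a) ^ 4) * ((1 - w) ^ 2 * (1 - Kb) * (1 - a) ^ 4))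
      with (4 * a^2 * (4 * (1 + 2*phi0) * ((1-w)^2 * (1-Kb)))) by (field; lra).
    assert (d * ((1 - w)^2 * (1 - Kb)) * ((1 - 4*phi0) * (1-a)^4) <= 4 * a^2 * tau^2 * ((1 - 4*phi0) * (1-a)^4))
      by (apply Rmult_le_compat_r; [apply Rmult_le_pos; lra| lra]).
    assert (4 * a^2 * (tau^2 * (1 - 4*phi0) * (1-a)^4) <= 4 * a^2 * (4 * (1 + 2*phi0) * ((1-w)^2 * (1-Kb))))
      by (apply Rmult_le_compat_l; nra).
    nra.
Qed.

Lemma Rdiv_le_0_compat x y : 0 <= x -> 0 < y -> 0 <= x / y.
Proof. intros. unfold Rdiv. apply Rmult_le_pos; [lra| left; apply Rinv_0_lt_compat; lra]. Qed.

Lemma tan_quarter_minus alpha : 0 <= alpha < 1/4 ->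
  tan (PI/4 - alpha) = (cos alpha - sin alpha) / (cos alpha + sin alpha).
Proof.
  intros ha. destruct (trig_basic alpha ha) as [hc [hs _]].
  unfold tan. rewrite sin_minus, cos_minus, sin_PI4, cos_PI4.
  pose proof Rlt_sqrt2_0. field. split; lra.
Qed.

Lemma cd_bound ca sa : 0 < ca -> 0 <= sa -> sa < ca -> ca^2 + sa^2 = 1 ->
  let a := sa / ca in let T := (ca + sa) / (ca - sa) in
  (T * (1 - ca) + 2 * sa) / sqrt (1 + T^2) <= 99/140 * ((1+a)*a^2/2 + 2*a*(1-a)).
Proof.
  intros hc hs hl e a T.
  assert (hc1 : ca <= 1) by nra.
  assert (ha : 0 <= a) by (unfold a; apply Rmult_le_pos; [lra| left; apply Rinv_0_lt_compat; lra]).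
  assert (ha1 : a < 1) by (unfold a; apply (Rmult_lt_reg_r ca); [lra|]; field_simplify; lra).
  assert (hsa : sa = a * ca) by (unfold a; field; lra).
  assert (hT : T = (1 + a) / (1 - a)) by (unfold T, a; field; split; lra).
  assert (hT0 : 0 < T) by (rewrite hT; apply Rdiv_lt_0_compat; lra).
  assert (h1 : 1 - ca <= a^2 / 2).
  { assert (a^2 = sa^2/ca^2) by (unfold a; field; lra).
    rewrite H. apply (Rmult_le_reg_r (2 * ca^2)); [nra|]. field_simplify; [|lra].
    assert (0 <= (1 - ca)*(1-ca)*(1+2*ca)) by (apply Rmult_le_pos; nra). nra. }
  assert (h2 : sa <= a) by nra.
  set (r0 := sqrt (1 + T^2)).
  assert (hr0 : 0 < r0) by (unfold r0; apply sqrt_lt_R0; nra).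
  assert (hr2 : r0 * r0 = 1 + T^2) by (unfold r0; apply sqrt_sqrt; nra).
  assert (hr : 140/99 <= r0 * (1 - a)).
  { apply Rsqr_incr_0_var; [|nra]. unfold Rsqr.
    replace (r0 * (1 - a) * (r0 * (1 - a))) with ((r0*r0) * (1-a)^2) by ring.
    rewrite hr2, hT. field_simplify; [|lra]. nra. }
  apply (Rmult_le_reg_l r0); auto. field_simplify; [|lra].
  assert (T * (1 - ca) + 2 * sa <= T * (a^2/2) + 2 * a) by (apply Rplus_le_compat; [apply Rmult_le_compat_l|]; lra).
  assert (T * (a^2/2) + 2*a = ((1+a) * a^2/2 + 2*a*(1-a)) / (1 - a)) by (rewrite hT; field; lra).
  assert (0 <= (1+a) * a^2/2 + 2*a*(1-a)) by nra.
  assert (((1+a) * a^2/2 + 2*a*(1-a)) / (1 - a) <= r0 * (99/140 * ((1+a)*a^2/2 + 2*a*(1-a)))).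
  { apply (Rmult_le_reg_r (1 - a)); [lra|]. field_simplify; [|lra]. nra. }
  nra.
Qed.

Lemma theorem2' (h alpha : R) (g : vec3) :
  0 < h -> 0 <= alpha -> alpha < 1/4 -> ground g ->
  let t := 2 * h / tan (PI / 4 - alpha) in
  let sp := vadd g (mkV (- t / 2) 0 h) in
  let sq := vadd g (mkV (t / 2) 0 h) in
  forall E : R,
    eps_le alpha g (view_plane h) E ->
    eps_le alpha g (fun s => s = sp \/ s = sq)
      (sqrt ((1 + 2 * alpha) / (1 - 4 * alpha)) * E).
Proof.
  intros hh ha0 ha1 hg t sp sq E hE.
  assert (ha : 0 <= alpha < 1/4) by lra.
  pose proof (lower_bound h alpha g E hh ha hg hE) as LB.
  destruct (trig_basic alpha ha) as [hc [hs [hsa [hcs hlt]]]].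
  set (ca := cos alpha) in *. set (sa := sin alpha) in *.
  set (T := (ca + sa) / (ca - sa)).
  assert (hT0 : 0 < T) by (unfold T; apply Rdiv_lt_0_compat; lra).
  assert (ht : t / 2 = h * T).
  { unfold t. rewrite tan_quarter_minus by auto. fold ca sa. unfold T. field. split; lra. }
  assert (Hsp : sp = vadd g (mkV (- (h*T)) 0 h)) by (unfold sp; f_equal; f_equal; lra).
  assert (Hsq : sq = vadd g (mkV (h*T) 0 h)) by (unfold sq; f_equal; f_equal; lra).
  clearbody sp sq. subst sp sq.
  set (r0 := sqrt (1 + T^2)).
  assert (hr0 : 0 < r0) by (unfold r0; apply sqrt_lt_R0; nra).
  assert (hr2 : r0 * r0 = 1 + T^2) by (unfold r0; apply sqrt_sqrt; nra).
  pose proof PI2_3_2 as hpi.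
  assert (hA : 0 <= alpha <= PI) by lra.
  intros u hadm p q hp hq.
  set (s1 := vadd g (mkV (- (h*T)) 0 h)) in *. set (s2 := vadd g (mkV (h*T) 0 h)) in *.
  destruct (hadm s1 (or_introl eq_refl)) as [hu1 hg1].
  destruct (hadm s2 (or_intror eq_refl)) as [hu2 hg2].
  set (u1 := u s1) in *. set (u2 := u s2) in *.
  assert (G1 : vsub g s1 = mkV (h*T) 0 (-h)) by (unfold s1; destruct g; unfold vsub, vadd; simpl; f_equal; ring).
  assert (G2 : vsub g s2 = mkV (-(h*T)) 0 (-h)) by (unfold s2; destruct g; unfold vsub, vadd; simpl; f_equal; ring).
  assert (N1 : vnorm (vsub g s1) = h * r0).
  { rewrite G1. unfold vnorm, dot; simpl.
    replace (h * T * (h * T) + 0 * 0 + - h * - h) with ((h*r0)^2) by (transitivity (h^2 * (r0*r0)); [ring| rewrite hr2; ring]).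
    apply sqrt_pow2. nra. }
  assert (N2 : vnorm (vsub g s2) = h * r0).
  { rewrite G2. unfold vnorm, dot; simpl.
    replace (- (h * T) * - (h * T) + 0 * 0 + - h * - h) with ((h*r0)^2) by (transitivity (h^2 * (r0*r0)); [ring| rewrite hr2; ring]).
    apply sqrt_pow2. nra. }
  pose proof (cone_dot alpha s1 u1 g hA hu1 hg1) as C1. fold ca in C1.
  pose proof (cone_dot alpha s2 u2 g hA hu2 hg2) as C2. fold ca in C2.
  assert (D1 : ca <= dot (mkV (T/r0) 0 (-1/r0)) u1).
  { rewrite N1, G1 in C1. destruct u1 as [x y z]. unfold dot in *; simpl in *.
    apply (Rmult_le_reg_l (h * r0)); [nra|]. field_simplify; [|lra]. nra. }
  assert (D2 : ca <= dot (mkV (-T/r0) 0 (-1/r0)) u2).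
  { rewrite N2, G2 in C2. destruct u2 as [x y z]. unfold dot in *; simpl in *.
    apply (Rmult_le_reg_l (h * r0)); [nra|]. field_simplify; [|lra]. nra. }
  destruct (cam_facts alpha u1 u2 ha hu1 hu2 D1 D2) as [K0 [K1 K2]].
  fold ca sa in K1, K2. fold T in K2. fold r0 in K2.
  pose proof (cone_dot alpha s1 u1 p hA hu1 (hp s1 (or_introl eq_refl))) as P1.
  pose proof (cone_dot alpha s2 u2 p hA hu2 (hp s2 (or_intror eq_refl))) as P2.
  pose proof (cone_dot alpha s1 u1 q hA hu1 (hq s1 (or_introl eq_refl))) as Q1.
  pose proof (cone_dot alpha s2 u2 q hA hu2 (hq s2 (or_intror eq_refl))) as Q2.
  fold ca in P1, P2, Q1, Q2.
  destruct (core ca sa s1 s2 u1 u2 p q hc hs hcs hu1 hu2 K0 P1 Q1 P2 Q2) as [L1 [L2 [R1 [R2 R3]]]].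
  set (a := sa / ca) in *.
  set (l1 := dot (vsub (mid p q) s1) u1) in *.
  set (l2 := dot (vsub (mid p q) s2) u2) in *.
  set (k := dot u1 u2) in *.
  set (D := dot (vsub p q) (vsub p q)) in *.
  assert (S12 : vsub s2 s1 = mkV (2*h*T) 0 0) by (unfold s1, s2; destruct g; unfold vsub, vadd; simpl; f_equal; ring).
  assert (NS : vnorm (vsub s2 s1) = 2 * h * T).
  { rewrite S12. unfold vnorm, dot; simpl. replace (2 * h * T * (2 * h * T) + 0 * 0 + 0 * 0) with ((2*h*T)^2) by ring.
    apply sqrt_pow2. nra. }
  assert (DS : dot (vsub s2 s1) (vadd u1 u2) = 2 * h * T * (vx u1 + vx u2)).
  { rewrite S12. destruct u1, u2; unfold dot, vadd; simpl. ring. }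
  rewrite NS in R2. rewrite DS in R3.
  assert (ha0' : 0 <= a) by (unfold a; apply Rmult_le_pos; [lra| left; apply Rinv_0_lt_compat; lra]).
  assert (hsa' : sa = a * ca) by (unfold a; field; lra).
  assert (hca2 : ca^2 * (1 + a^2) = 1) by (rewrite hsa' in hcs; nra).
  assert (hTa : T = (1 + a)/(1 - a)).
  { unfold T. rewrite hsa'. assert (a < 1) by (unfold a; apply (Rmult_lt_reg_r ca); [lra|]; field_simplify; lra).
    field. split; lra. }
  assert (ha1' : a < 1) by (unfold a; apply (Rmult_lt_reg_r ca); [lra|]; field_simplify; lra).
  assert (h15 : 15 * a^2 < 1).
  { assert (sa^2 < 1/16) by nra. assert (a^2 * ca^2 < 1/16) by (rewrite hsa' in H; nra). nra. }
  assert (hKb : 4 * sa * ca * (ca^2 - sa^2) = 4*a*(1-a^2)/(1+a^2)^2).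
  { rewrite hsa'. assert (hc2 : ca^2 <> 0) by (apply Rgt_not_eq; nra).
    assert (1 + a^2 = / ca^2) by (apply (Rmult_eq_reg_l (ca^2)); [rewrite Rinv_r; [lra|exact hc2]| exact hc2]).
    rewrite H. field. lra. }
  pose proof (cd_bound ca sa hc hs hlt hcs) as CDB. cbv zeta in CDB. fold a T r0 in CDB.
  set (cd := (T * (1 - ca) + 2 * sa) / r0) in *.
  assert (hcd0 : 0 <= cd) by (pose proof (Rabs_pos (vx u1 + vx u2)); lra).
  set (d := D / h^2). set (m1 := l1 / h). set (m2 := l2 / h).
  assert (hD : D = h^2 * d) by (unfold d; field; lra).
  assert (hl1 : l1 = h * m1) by (unfold m1; field; lra).
  assert (hl2 : l2 = h * m2) by (unfold m2; field; lra).
  assert (hD0 : 0 <= D) by (unfold D; apply dot_self_ge0).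
  assert (hd0 : 0 <= d) by (unfold d; apply Rdiv_le_0_compat; nra).
  assert (hm1 : 0 <= m1) by (unfold m1; apply Rdiv_le_0_compat; lra).
  assert (hm2 : 0 <= m2) by (unfold m2; apply Rdiv_le_0_compat; lra).
  assert (F1 : d * (1 - - k) <= 4 * a^2 * (m1^2 + m2^2)).
  { rewrite hD, hl1, hl2 in R1. apply (Rmult_le_reg_l (h^2)); [nra|]. nra. }
  assert (F2 : m1^2 + m2^2 + 2 * (-k) * m1 * m2 <= (2*(1+a)/(1-a) + a*(m1+m2))^2).
  { rewrite hl1, hl2 in R2. apply (Rmult_le_reg_l (h^2)); [nra|].
    replace (h^2 * (2 * (1 + a) / (1 - a) + a * (m1 + m2)) ^ 2) with ((2 * h * T + a * (h * m1 + h * m2)) ^ 2)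
      by (rewrite hTa; field; lra). nra. }
  assert (F3 : Rabs (m1 - m2) * (1 - - k) <= 2*(1+a)/(1-a) * cd + a*(m1+m2)).
  { rewrite hl1, hl2 in R3. rewrite Rabs_mult, (Rabs_right (2*h*T)) in R3 by nra.
    replace (h * m1 - h * m2) with (h * (m1 - m2)) in R3 by ring.
    rewrite Rabs_mult, (Rabs_right h) in R3 by lra.
    apply (Rmult_le_reg_l h); [lra|]. replace (2*(1+a)/(1-a)) with (2*T) by (rewrite hTa; field; lra).
    assert (2 * h * T * Rabs (vx u1 + vx u2) <= 2 * h * T * cd) by (apply Rmult_le_compat_l; nra).
    nra. }
  assert (hK : 0 <= - k) by lra.
  assert (hKb' : - k <= 4*a*(1-a^2)/(1+a^2)^2) by (rewrite <- hKb; lra).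
  set (phi := a - a^3/2) in *.
  assert (hphi : phi <= sa).
  { unfold phi. rewrite hsa'. assert (1 - a^2/2 <= ca).
    { apply Rsqr_incr_0_var; [|lra]. unfold Rsqr.
      assert (0 <= a^2 * a^2 * (3 - a^2)) by (apply Rmult_le_pos; nra).
      nra. }
    nra. }
  assert (hphi4 : 4 * phi < 1) by lra.
  pose proof (FS a (-k) m1 m2 d cd ha0' h15 hphi4 hK hKb' hm1 hm2 hd0 hcd0 CDB F1 F2 F3) as FSr. fold phi in FSr.
  assert (hphi0 : 0 <= phi) by (unfold phi; nra).
  assert (hk2 : (1 + 2*phi)/(1 - 4*phi) <= (1 + 2*alpha)/(1 - 4*alpha)).
  { apply (Rmult_le_reg_r ((1-4*phi)*(1-4*alpha))); [nra|]. field_simplify; [|lra|lra]. nra. }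
  set (ell := 4 * sa * ca / (ca - sa)^2) in *.
  assert (hell : ell = 4 * a / (1-a)^2) by (unfold ell; rewrite hsa'; field; split; lra).
  assert (hE0 : 0 <= h * ell) by (rewrite hell; apply Rmult_le_pos; [lra|apply Rdiv_le_0_compat; nra]).
  assert (Dle : D <= (1 + 2*alpha)/(1 - 4*alpha) * E^2).
  { rewrite hD.
    assert (d <= (1 + 2*phi)/(1 - 4*phi) * ell^2).
    { rewrite hell. apply (Rmult_le_reg_r (1 - 4*phi)); [lra|].
      replace ((1 + 2 * phi) / (1 - 4 * phi) * (4 * a / (1 - a) ^ 2) ^ 2 * (1 - 4 * phi))
        with ((1 + 2 * phi) * (16 * a ^ 2 / (1 - a) ^ 4)) by (field; split; lra). lra. }
    assert (0 <= (1 + 2*phi)/(1 - 4*phi)) by (apply Rdiv_le_0_compat; lra).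
    assert (ell^2 * h^2 <= E^2) by (replace (ell^2 * h^2) with ((h*ell)^2) by ring; apply pow_incr; lra).
    assert (0 <= ell^2) by nra.
    assert (d <= (1 + 2*alpha)/(1 - 4*alpha) * ell^2).
    { eapply Rle_trans. exact H. apply Rmult_le_compat_r; auto. }
    assert (0 <= (1 + 2*alpha)/(1 - 4*alpha)) by (apply Rdiv_le_0_compat; lra).
    nra. }
  unfold Defs.dist. unfold vnorm. fold D.
  assert (hE1 : 0 <= E) by lra.
  rewrite <- (sqrt_pow2 E hE1). rewrite <- sqrt_mult.
  apply sqrt_le_1_alt. exact Dle.
  apply Rdiv_le_0_compat; lra. apply pow2_ge_0.
Qed.


Theorem theorem2 (h alpha : R) (g : vec3) :
  0 < h -> 0 <= alpha -> alpha < 1/4 -> ground g ->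
  let t := 2 * h / tan (PI / 4 - alpha) in
  let sp := vadd g (mkV (- t / 2) 0 h) in
  let sq := vadd g (mkV (t / 2) 0 h) in
  forall E : R,
    eps_le alpha g (view_plane h) E ->
    eps_le alpha g (fun s => s = sp \/ s = sq)
      (sqrt ((1 + 2 * alpha) / (1 - 4 * alpha)) * E).
Proof. exact (theorem2' h alpha g). Qed.
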